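(* Let $U\subset\mathbb{R}^n$ be a bounded domain with smooth boundary and let $(u_1,u_2)\in C(\overline U)^2$ be a viscosity solution of the system (S) in $U$. Then for every $y\in U$ and $i\in\{1,2\}$, the limits $S_i^+(y)=\lim_{r\to0^+}S_i^+(y,r)$ and $S_i^-(y)=\lim_{r\to0^+}S_i^-(y,r)$ exist and satisfy $S_i^+(y)=-S_i^-(y)$.
   Context: For $\varphi\in C^2$ near $x$, set $\Delta_\infty\varphi(x)=|D\varphi(x)|^{-2}\sum_{k,l=1}^n\varphi_{x_k}\varphi_{x_l}\varphi_{x_kx_l}(x)$ when $D\varphi(x)\neq0$. Define $\Delta_\infty^+\varphi(x)=\Delta_\infty\varphi(x)$ if $D\varphi(x)\ne0$ and $\Delta_\infty^+\varphi(x)=\max\{D^2\varphi(x)v\cdot v: v\in\mathbb{S}^{n-1}\}$ if $D\varphi(x)=0$; define $\Delta_\infty^-\varphi(x)$ in the same way with $\min$ in place of $\max$. The system (S) on an open set $\Omega$ is: $-\Delta_\infty u_1+u_1-u_2=0$ and $-\Delta_\infty u_2+u_2-u_1=0$ in $\Omega$. A pair $(u_1,u_2)$ of upper semicontinuous functions on $\Omega$ is a viscosity subsolution of (S) in $\Omega$ if for each $i\in\{1,2\}$, $j=3-i$, and each $\varphi\in C^2(\Omega)$ such that $u_i-\varphi$ has a local maximum at $x_0\in\Omega$, one has $-\Delta_\infty^+\varphi(x_0)+u_i(x_0)-u_j(x_0)\le0$. A pair of lower semicontinuous functions on $\Omega$ is a viscosity supersolution if for each $i$, $j=3-i$, and each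 $\varphi\in C^2(\Omega)$ such that $u_i-\varphi$ has a local minimum at $x_0\in\Omega$, one has $-\Delta_\infty^-\varphi(x_0)+u_i(x_0)-u_j(x_0)\ge0$. A viscosity solution is a pair that is both a subsolution and a supersolution. For $y\in U$, $r>0$ with $\overline B(y,r)\subset U$: $S_i^+(y,r)=\frac{\max_{|z-y|=r}u_i(z)-u_i(y)}{r}$ and $S_i^-(y,r)=\frac{\min_{|z-y|=r}u_i(z)-u_i(y)}{r}$. *)

(* Defs.v *)
From Stdlib Require Import Reals Lra Lia ClassicalEpsilon.
Open Scope R_scope.

(* R^n is modelled as the subspace E_n = { x : nat -> R | x k = 0 for k >= n }
   of nat -> R; all sets considered are subsets of E_n. *)
Definition pt := nat -> R.
Definition inRn (n : nat) (x : pt) : Prop := forall k, (n <= k)%nat -> x k = 0.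

Fixpoint sumR (n : nat) (f : nat -> R) : R :=
  match n with O => 0 | S m => sumR m f + f m end.

Definition vadd (x y : pt) : pt := fun k => x k + y k.
Definition vsub (x y : pt) : pt := fun k => x k - y k.
Definition vscal (t : R) (x : pt) : pt := fun k => t * x k.
Definition ebasis (j : nat) : pt := fun k => if Nat.eqb k j then 1 else 0.

Definition rnorm (n : nat) (x : pt) : R := sqrt (sumR n (fun k => x k ^ 2)).
Definition rdist (n : nat) (x y : pt) : R := rnorm n (vsub x y).

Definition ball (n : nat) (y : pt) (r : R) (z : pt) : Prop :=
  inRn n z /\ rdist n z y < r.
Definition cball (n : nat) (y : pt) (r : R) (z : pt) : Prop :=
  inRn n z /\ rdist n z y <= r.
Definition sphere (n : nat) (y : pt) (r : R) (z : pt) : Prop :=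
  inRn n z /\ rdist n z y = r.

Definition psubset (A B : pt -> Prop) : Prop := forall x, A x -> B x.

Definition is_open (n : nat) (O : pt -> Prop) : Prop :=
  psubset O (inRn n) /\
  forall x, O x -> exists r, 0 < r /\ psubset (ball n x r) O.

Definition connected (n : nat) (U : pt -> Prop) : Prop :=
  ~ exists A B : pt -> Prop,
      is_open n A /\ is_open n B /\
      (forall x, U x -> A x \/ B x) /\
      (forall x, U x -> A x -> B x -> False) /\
      (exists x, U x /\ A x) /\ (exists x, U x /\ B x).

Definition domain (n : nat) (U : pt -> Prop) : Prop :=
  is_open n U /\ connected n U /\ exists x, U x.

Definition bdd (n : nat) (U : pt -> Prop) : Prop :=
  exists M, forall x, U x -> rnorm n x <= M.

Definition clos (n : nat) (U : pt -> Prop) (x : pt) : Prop :=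
  inRn n x /\ forall r, 0 < r -> exists z, U z /\ rdist n z x < r.

Definition boundary (n : nat) (U : pt -> Prop) (x : pt) : Prop :=
  clos n U x /\ ~ U x.

Definition continuous_on (n : nat) (A : pt -> Prop) (f : pt -> R) : Prop :=
  forall x, A x -> forall eps, 0 < eps -> exists delta, 0 < delta /\
    forall z, A z -> rdist n z x < delta -> Rabs (f z - f x) < eps.

Definition is_partial (f : pt -> R) (k : nat) (x : pt) (l : R) : Prop :=
  derivable_pt_lim (fun t => f (vadd x (vscal t (ebasis k)))) 0 l.

Definition partials_on (n : nat) (O : pt -> Prop) (f : pt -> R)
  (g : nat -> pt -> R) : Prop :=
  forall k, (k < n)%nat -> forall x, O x -> is_partial f k x (g k x).

Fixpoint Ck (n m : nat) (f : pt -> R) (O : pt -> Prop) : Prop :=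
  match m with
  | O => continuous_on n O f
  | S m' => exists g : nat -> pt -> R,
      partials_on n O f g /\ forall k, (k < n)%nat -> Ck n m' (g k) O
  end.

Definition smooth_on (n : nat) (f : pt -> R) (O : pt -> Prop) : Prop :=
  forall m, Ck n m f O.

Definition smooth_boundary (n : nat) (U : pt -> Prop) : Prop :=
  forall x0, boundary n U x0 ->
    exists r (rho : pt -> R) (g : nat -> pt -> R), 0 < r /\
      smooth_on n rho (ball n x0 r) /\
      partials_on n (ball n x0 r) rho g /\
      (forall x, ball n x0 r x -> exists k, (k < n)%nat /\ g k x <> 0) /\
      (forall x, ball n x0 r x -> (U x <-> rho x < 0)).

Definition C2data (n : nat) (Om : pt -> Prop) (phi : pt -> R)
  (p : nat -> pt -> R) (q : nat -> nat -> pt -> R) : Prop :=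
  continuous_on n Om phi /\
  partials_on n Om phi p /\
  (forall k, (k < n)%nat -> continuous_on n Om (p k)) /\
  (forall k, (k < n)%nat -> partials_on n Om (p k) (q k)) /\
  (forall k l, (k < n)%nat -> (l < n)%nat -> continuous_on n Om (q k l)).

Definition grad_sq (n : nat) (p : nat -> pt -> R) (x : pt) : R :=
  sumR n (fun k => p k x ^ 2).

Definition quad (n : nat) (q : nat -> nat -> pt -> R) (x v : pt) : R :=
  sumR n (fun k => sumR n (fun l => v k * v l * q k l x)).

Definition inf_lap (n : nat) (p : nat -> pt -> R) (q : nat -> nat -> pt -> R)
  (x : pt) : R :=
  sumR n (fun k => sumR n (fun l => p k x * p l x * q k l x)) / grad_sq n p x.

Definition unit_vec (n : nat) (v : pt) : Prop := inRn n v /\ rnorm n v = 1.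

Definition grad_zero (n : nat) (p : nat -> pt -> R) (x : pt) : Prop :=
  forall k, (k < n)%nat -> p k x = 0.

Definition inf_lap_plus (n : nat) (p : nat -> pt -> R)
  (q : nat -> nat -> pt -> R) (x : pt) (L : R) : Prop :=
  (~ grad_zero n p x /\ L = inf_lap n p q x) \/
  (grad_zero n p x /\ (exists v, unit_vec n v /\ quad n q x v = L) /\
     forall v, unit_vec n v -> quad n q x v <= L).

Definition inf_lap_minus (n : nat) (p : nat -> pt -> R)
  (q : nat -> nat -> pt -> R) (x : pt) (L : R) : Prop :=
  (~ grad_zero n p x /\ L = inf_lap n p q x) \/
  (grad_zero n p x /\ (exists v, unit_vec n v /\ quad n q x v = L) /\
     forall v, unit_vec n v -> L <= quad n q x v).

Definition loc_max (n : nat) (Om : pt -> Prop) (f : pt -> R) (x0 : pt) : Prop :=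
  exists d, 0 < d /\ forall x, Om x -> rdist n x x0 < d -> f x <= f x0.
Definition loc_min (n : nat) (Om : pt -> Prop) (f : pt -> R) (x0 : pt) : Prop :=
  exists d, 0 < d /\ forall x, Om x -> rdist n x x0 < d -> f x0 <= f x.

Definition usc_on (n : nat) (Om : pt -> Prop) (f : pt -> R) : Prop :=
  forall x, Om x -> forall eps, 0 < eps -> exists d, 0 < d /\
    forall z, Om z -> rdist n z x < d -> f z < f x + eps.
Definition lsc_on (n : nat) (Om : pt -> Prop) (f : pt -> R) : Prop :=
  forall x, Om x -> forall eps, 0 < eps -> exists d, 0 < d /\
    forall z, Om z -> rdist n z x < d -> f x - eps < f z.

Definition other (i : bool) (u1 u2 : pt -> R) : (pt -> R) * (pt -> R) :=
  if i then (u1, u2) else (u2, u1).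

Definition visc_sub (n : nat) (Om : pt -> Prop) (u1 u2 : pt -> R) : Prop :=
  usc_on n Om u1 /\ usc_on n Om u2 /\
  forall (i : bool) phi p q x0,
    C2data n Om phi p q ->
    Om x0 ->
    loc_max n Om (fun x => fst (other i u1 u2) x - phi x) x0 ->
    forall L, inf_lap_plus n p q x0 L ->
      - L + fst (other i u1 u2) x0 - snd (other i u1 u2) x0 <= 0.

Definition visc_super (n : nat) (Om : pt -> Prop) (u1 u2 : pt -> R) : Prop :=
  lsc_on n Om u1 /\ lsc_on n Om u2 /\
  forall (i : bool) phi p q x0,
    C2data n Om phi p q ->
    Om x0 ->
    loc_min n Om (fun x => fst (other i u1 u2) x - phi x) x0 ->
    forall L, inf_lap_minus n p q x0 L ->
      - L + fst (other i u1 u2) x0 - snd (other i u1 u2) x0 >= 0.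

Definition visc_sol (n : nat) (Om : pt -> Prop) (u1 u2 : pt -> R) : Prop :=
  visc_sub n Om u1 u2 /\ visc_super n Om u1 u2.

(* max / min of u over the sphere |z - y| = r (chosen by epsilon; it exists
   whenever the sphere is nonempty and u is continuous on it) *)
Definition is_max_on (A : pt -> Prop) (u : pt -> R) (M : R) : Prop :=
  (exists z, A z /\ u z = M) /\ forall z, A z -> u z <= M.
Definition is_min_on (A : pt -> Prop) (u : pt -> R) (M : R) : Prop :=
  (exists z, A z /\ u z = M) /\ forall z, A z -> M <= u z.

Definition sph_max (n : nat) (u : pt -> R) (y : pt) (r : R) : R :=
  epsilon (inhabits 0) (is_max_on (sphere n y r) u).
Definition sph_min (n : nat) (u : pt -> R) (y : pt) (r : R) : R :=
  epsilon (inhabits 0) (is_min_on (sphere n y r) u).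

Definition S_plus (n : nat) (u : pt -> R) (y : pt) (r : R) : R :=
  (sph_max n u y r - u y) / r.
Definition S_minus (n : nat) (u : pt -> R) (y : pt) (r : R) : R :=
  (sph_min n u y r - u y) / r.

Definition lim_right0 (f : R -> R) (l : R) : Prop :=
  forall eps, 0 < eps -> exists d, 0 < d /\
    forall r, 0 < r < d -> Rabs (f r - l) < eps.

(* Main.v *)
Require Import Defs.
From Stdlib Require Import Reals.
From Stdlib Require Import Lra Lia ClassicalEpsilon FunctionalExtensionality Classical ZArith.
From Stdlib Require Rtopology.
Open Scope R_scope.


Lemma sumR_ext n f g : (forall k, (k < n)%nat -> f k = g k) -> sumR n f = sumR n g.
Proof. induction n; simpl; intros H; auto. rewrite IHn by (intros; apply H; lia). rewrite H by lia. auto. Qed.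

Lemma sumR_plus n f g : sumR n (fun k => f k + g k) = sumR n f + sumR n g.
Proof. induction n; simpl; [lra|rewrite IHn; lra]. Qed.

Lemma sumR_minus n f g : sumR n (fun k => f k - g k) = sumR n f - sumR n g.
Proof. induction n; simpl; [lra|rewrite IHn; lra]. Qed.

Lemma sumR_scal n c f : sumR n (fun k => c * f k) = c * sumR n f.
Proof. induction n; simpl; [lra|rewrite IHn; lra]. Qed.

Lemma sumR_scalr n c f : sumR n (fun k => f k * c) = sumR n f * c.
Proof. induction n; simpl; [lra|rewrite IHn; lra]. Qed.

Lemma sumR_zero n : sumR n (fun _ => 0) = 0.
Proof. induction n; simpl; [lra|rewrite IHn; lra]. Qed.

Lemma sumR_le n f g : (forall k, (k < n)%nat -> f k <= g k) -> sumR n f <= sumR n g.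
Proof. induction n; simpl; intros H; [lra|]. assert (f n <= g n) by (apply H; lia).
 assert (sumR n f <= sumR n g) by (apply IHn; intros; apply H; lia). lra. Qed.

Lemma sumR_nonneg n f : (forall k, (k < n)%nat -> 0 <= f k) -> 0 <= sumR n f.
Proof. intros H. rewrite <- (sumR_zero n). apply sumR_le; auto. Qed.

Lemma sumR_term_le n f j : (forall k, (k < n)%nat -> 0 <= f k) -> (j < n)%nat -> f j <= sumR n f.
Proof. induction n; simpl; intros H Hj; [lia|].
 assert (0 <= sumR n f) by (apply sumR_nonneg; intros; apply H; lia).
 destruct (Nat.eq_dec j n). subst. lra.
 assert (f j <= sumR n f) by (apply IHn; [intros; apply H; lia| lia]). assert (0 <= f n) by (apply H; lia). lra. Qed.

Definition dl (k j : nat) : R := if Nat.eqb k j then 1 else 0.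

Lemma sumR_dl n f j : (j < n)%nat -> sumR n (fun k => f k * dl k j) = f j.
Proof. induction n; simpl; intros Hj; [lia|]. unfold dl at 2.
 destruct (Nat.eqb_spec n j).
 - subst. rewrite (sumR_ext _ _ (fun _ => 0)). rewrite sumR_zero; lra.
   intros k Hk. unfold dl. destruct (Nat.eqb_spec k j); [lia|lra].
 - rewrite IHn by lia. lra. Qed.

Lemma sumR_dl' n f j : (j < n)%nat -> sumR n (fun k => dl k j * f k) = f j.
Proof. intros. rewrite <- (sumR_dl n f j) by auto. apply sumR_ext; intros; lra. Qed.

Lemma sumR_swap n m (F : nat -> nat -> R) :
  sumR n (fun k => sumR m (fun l => F k l)) = sumR m (fun l => sumR n (fun k => F k l)).
Proof. induction n; simpl.
 - symmetry. apply sumR_zero.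
 - rewrite IHn. rewrite <- sumR_plus. auto. Qed.

Definition nsq (n : nat) (x : pt) : R := sumR n (fun k => x k ^ 2).
Definition dot (n : nat) (x y : pt) : R := sumR n (fun k => x k * y k).

Lemma nsq_nonneg n x : 0 <= nsq n x.
Proof. apply sumR_nonneg; intros; apply pow2_ge_0. Qed.

Lemma rnorm_sq n x : rnorm n x ^ 2 = nsq n x.
Proof. unfold rnorm. rewrite <- Rsqr_pow2. apply Rsqr_sqrt. apply nsq_nonneg. Qed.

Lemma rnorm_nonneg n x : 0 <= rnorm n x.
Proof. apply sqrt_pos. Qed.

Lemma nsq_zero_all n x : nsq n x = 0 -> forall k, (k < n)%nat -> x k = 0.
Proof. intros H k Hk. assert (x k ^ 2 <= nsq n x).
 { apply (sumR_term_le n (fun k => x k ^ 2)); auto. intros; apply pow2_ge_0. }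
 assert (0 <= x k ^2) by apply pow2_ge_0. assert (x k ^ 2 = 0) by lra. nra. Qed.

Lemma cauchy_schwarz n a b : dot n a b ^ 2 <= nsq n a * nsq n b.
Proof.
 destruct (Req_dec (nsq n b) 0) as [Hb|Hb].
 - assert (dot n a b = 0). { unfold dot. rewrite (sumR_ext _ _ (fun _ => 0)). apply sumR_zero.
     intros k Hk. rewrite (nsq_zero_all n b Hb k Hk). lra. }
   rewrite H, Hb. lra.
 - assert (Hp : 0 < nsq n b) by (pose proof (nsq_nonneg n b); lra).
   set (t := - dot n a b / nsq n b).
   assert (0 <= sumR n (fun k => (a k + t * b k) ^ 2)) by (apply sumR_nonneg; intros; apply pow2_ge_0).
   rewrite (sumR_ext _ _ (fun k => a k ^ 2 + (2 * t) * (a k * b k) + t^2 * (b k ^ 2))) in H by (intros; ring).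
   rewrite !sumR_plus, !sumR_scal in H. fold (nsq n a) (nsq n b) (dot n a b) in H.
   unfold t in H. 
   assert (0 <= nsq n a - dot n a b ^ 2 / nsq n b).
   { replace (nsq n a - dot n a b ^ 2 / nsq n b) with
     (nsq n a + 2 * (- dot n a b / nsq n b) * dot n a b + (- dot n a b / nsq n b) ^ 2 * nsq n b) by (field; lra). auto. }
   assert (0 <= nsq n a * nsq n b - dot n a b ^ 2).
   { replace (nsq n a * nsq n b - dot n a b ^ 2) with ((nsq n a - dot n a b ^ 2 / nsq n b) * nsq n b) by (field; lra).
     apply Rmult_le_pos; lra. }
   lra.
Qed.

Lemma dot_le n a b : Rabs (dot n a b) <= rnorm n a * rnorm n b.
Proof.
 rewrite <- (sqrt_pow2 (Rabs (dot n a b))) by apply Rabs_pos.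
 unfold rnorm. rewrite <- sqrt_mult by apply nsq_nonneg.
 apply sqrt_le_1_alt. rewrite pow2_abs.
 apply cauchy_schwarz. Qed.

Lemma rnorm_ext n x y : (forall k, (k < n)%nat -> x k = y k) -> rnorm n x = rnorm n y.
Proof. intros H. unfold rnorm. f_equal. apply sumR_ext. intros. rewrite H; auto. Qed.

Lemma sqrt_le_from_sq a b : 0 <= b -> a <= b ^ 2 -> sqrt a <= b.
Proof. intros Hb H. rewrite <- (sqrt_pow2 b Hb). apply sqrt_le_1_alt. lra. Qed.

Lemma rnorm_triangle n x y : rnorm n (vadd x y) <= rnorm n x + rnorm n y.
Proof. unfold rnorm at 1. apply sqrt_le_from_sq.
 - pose proof (rnorm_nonneg n x); pose proof (rnorm_nonneg n y); lra.
 - unfold vadd. rewrite (sumR_ext _ _ (fun k => x k ^ 2 + 2 * (x k * y k) + y k ^2)) by (intros; ring).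
   rewrite !sumR_plus, sumR_scal. fold (nsq n x) (nsq n y) (dot n x y).
   pose proof (dot_le n x y). rewrite <- (rnorm_sq n x), <- (rnorm_sq n y).
   pose proof (Rle_abs (dot n x y)). nra. Qed.

Lemma rdist_triangle n x y z : rdist n x z <= rdist n x y + rdist n y z.
Proof. unfold rdist. rewrite (rnorm_ext n (vsub x z) (vadd (vsub x y) (vsub y z))).
 apply rnorm_triangle. intros; unfold vsub, vadd; ring. Qed.

Lemma rdist_sym n x y : rdist n x y = rdist n y x.
Proof. unfold rdist, rnorm. f_equal. apply sumR_ext. intros; unfold vsub; ring. Qed.

Lemma rdist_nonneg n x y : 0 <= rdist n x y.
Proof. apply rnorm_nonneg. Qed.

Lemma rdist_refl n x : rdist n x x = 0.
Proof. unfold rdist, rnorm. rewrite (sumR_ext _ _ (fun _ => 0)). rewrite sumR_zero. apply sqrt_0.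
 intros; unfold vsub; ring. Qed.

Lemma coord_le n x k : (k < n)%nat -> Rabs (x k) <= rnorm n x.
Proof. intros Hk. unfold rnorm. rewrite <- sqrt_Rsqr_abs. apply sqrt_le_1_alt.
 rewrite Rsqr_pow2. apply (sumR_term_le n (fun k => x k ^ 2)); auto. intros; apply pow2_ge_0. Qed.

Lemma coord_dist n x y k : (k < n)%nat -> Rabs (x k - y k) <= rdist n x y.
Proof. intros. apply (coord_le n (vsub x y) k); auto. Qed.

Lemma rdist_sq n x y : rdist n x y ^ 2 = sumR n (fun k => (x k - y k) ^ 2).
Proof. unfold rdist. rewrite rnorm_sq. reflexivity. Qed.

Lemma rdist_reverse n x z w : Rabs (rdist n z w - rdist n x w) <= rdist n z x.
Proof. pose proof (rdist_triangle n z x w). pose proof (rdist_triangle n x z w).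
 rewrite (rdist_sym n x z) in H0. apply Rabs_le; lra. Qed.

Lemma rdist_zero_eq n x y : inRn n x -> inRn n y -> rdist n x y = 0 -> x = y.
Proof. intros Hx Hy H. apply functional_extensionality. intros k.
 destruct (Nat.lt_ge_cases k n).
 - assert (nsq n (vsub x y) = 0). { rewrite <- (rnorm_sq n (vsub x y)). change (rdist n x y ^ 2 = 0). rewrite H. ring. }
   pose proof (nsq_zero_all _ _ H1 k H0). unfold vsub in H2. lra.
 - rewrite Hx, Hy; auto. Qed.

Lemma abs_le_split a b : Rabs a <= b -> - b <= a <= b.
Proof. intros H. pose proof (Rle_abs a). pose proof (Rle_abs (-a)). rewrite Rabs_Ropp in H1. lra. Qed.
Lemma abs_lt_split a b : Rabs a < b -> - b < a < b.
Proof. intros H. pose proof (Rle_abs a). pose proof (Rle_abs (-a)). rewrite Rabs_Ropp in H1. lra. Qed.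

Definition cont_at (n : nat) (f : pt -> R) (x : pt) : Prop :=
  forall eps, 0 < eps -> exists d, 0 < d /\ forall z, rdist n z x < d -> Rabs (f z - f x) < eps.

Definition rel_cont (n : nat) (A : pt -> Prop) (f : pt -> R) (x : pt) : Prop :=
  forall eps, 0 < eps -> exists d, 0 < d /\ forall z, A z -> rdist n z x < d -> Rabs (f z - f x) < eps.

Lemma cont_const n c x : cont_at n (fun _ => c) x.
Proof. intros e He. exists 1. split; [lra|]. intros. rewrite Rminus_diag, Rabs_R0. auto. Qed.

Lemma cont_coord n k x : (k < n)%nat -> cont_at n (fun z => z k) x.
Proof. intros Hk e He. exists e. split; auto. intros z Hz. pose proof (coord_dist n z x k Hk). lra. Qed.

Lemma cont_rdist n w x : cont_at n (fun z => rdist n z w) x.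
Proof. intros e He. exists e. split; auto. intros z Hz. pose proof (rdist_reverse n x z w). lra. Qed.

Lemma cont_plus n f g x : cont_at n f x -> cont_at n g x -> cont_at n (fun z => f z + g z) x.
Proof. intros Hf Hg e He. destruct (Hf (e/2)) as [d1 [Hd1 H1]]; [lra|].
 destruct (Hg (e/2)) as [d2 [Hd2 H2]]; [lra|]. exists (Rmin d1 d2). split; [apply Rmin_pos; auto|].
 intros z Hz. specialize (H1 z (Rlt_le_trans _ _ _ Hz (Rmin_l _ _))).
 specialize (H2 z (Rlt_le_trans _ _ _ Hz (Rmin_r _ _))).
 replace (f z + g z - (f x + g x)) with ((f z - f x) + (g z - g x)) by ring.
 pose proof (Rabs_triang (f z - f x) (g z - g x)). lra. Qed.

Lemma cont_opp n f x : cont_at n f x -> cont_at n (fun z => - f z) x.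
Proof. intros Hf e He. destruct (Hf e He) as [d [Hd H]]. exists d. split; auto. intros z Hz.
 replace (- f z - - f x) with (- (f z - f x)) by ring. rewrite Rabs_Ropp. auto. Qed.

Lemma cont_minus n f g x : cont_at n f x -> cont_at n g x -> cont_at n (fun z => f z - g z) x.
Proof. intros Hf Hg. apply (cont_plus n f (fun z => - g z)); auto. apply cont_opp; auto. Qed.

Lemma cont_mult n f g x : cont_at n f x -> cont_at n g x -> cont_at n (fun z => f z * g z) x.
Proof. intros Hf Hg e He.
 set (A := Rabs (f x) + 1). set (Bg := Rabs (g x) + 1).
 assert (HA : 0 < A) by (unfold A; pose proof (Rabs_pos (f x)); lra).
 assert (HB : 0 < Bg) by (unfold Bg; pose proof (Rabs_pos (g x)); lra).
 destruct (Hf (Rmin 1 (e / (2 * Bg)))) as [d1 [Hd1 H1]].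
 { apply Rmin_pos; [lra|]. apply Rdiv_lt_0_compat; lra. }
 destruct (Hg (e / (2 * A))) as [d2 [Hd2 H2]]. { apply Rdiv_lt_0_compat; lra. }
 exists (Rmin d1 d2). split; [apply Rmin_pos; auto|].
 intros z Hz. specialize (H1 z (Rlt_le_trans _ _ _ Hz (Rmin_l _ _))).
 specialize (H2 z (Rlt_le_trans _ _ _ Hz (Rmin_r _ _))).
 assert (Hf1 : Rabs (f z - f x) < 1) by (eapply Rlt_le_trans; [apply H1| apply Rmin_l]).
 assert (Hf2 : Rabs (f z - f x) < e / (2 * Bg)) by (eapply Rlt_le_trans; [apply H1| apply Rmin_r]).
 replace (f z * g z - f x * g x) with (f z * (g z - g x) + g x * (f z - f x)) by ring.
 eapply Rle_lt_trans. apply Rabs_triang. rewrite !Rabs_mult.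
 assert (Rabs (f z) <= A). { unfold A. replace (f z) with (f x + (f z - f x)) by ring.
   pose proof (Rabs_triang (f x) (f z - f x)). lra. }
 assert (Rabs (f z) * Rabs (g z - g x) <= A * (e / (2 * A))).
 { apply Rmult_le_compat; try apply Rabs_pos; lra. }
 assert (Rabs (g x) * Rabs (f z - f x) <= Bg * (e / (2 * Bg))).
 { apply Rmult_le_compat; try apply Rabs_pos; [unfold Bg; lra| lra]. }
 replace (A * (e / (2 * A))) with (e/2) in H0 by (field; lra).
 replace (Bg * (e / (2 * Bg))) with (e/2) in H3 by (field; lra).
 assert (Rabs (f z) * Rabs (g z - g x) < e / 2 \/ Rabs (g x) * Rabs (f z - f x) < e/2).
 { destruct (Req_dec (Rabs (g x)) 0).
   - right. rewrite H4. lra.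
   - left. apply Rle_lt_trans with (A * Rabs (g z - g x)).
     apply Rmult_le_compat_r; [apply Rabs_pos|auto].
     apply Rlt_le_trans with (A * (e / (2 * A))). apply Rmult_lt_compat_l; auto.
     right; field; lra. }
 destruct H4; lra.
Qed.

Lemma cont_sumR n m (F : nat -> pt -> R) x :
  (forall k, (k < m)%nat -> cont_at n (F k) x) -> cont_at n (fun z => sumR m (fun k => F k z)) x.
Proof. induction m; simpl; intros H.
 - apply cont_const.
 - apply (cont_plus n (fun z => sumR m (fun k => F k z)) (F m)).
   apply IHm; intros; apply H; lia. apply H; lia. Qed.

Lemma cont_rel n A f x : cont_at n f x -> rel_cont n A f x.
Proof. intros H e He. destruct (H e He) as [d [Hd H1]]. exists d; split; auto. Qed.

Lemma rel_minus n A f g x : rel_cont n A f x -> rel_cont n A g x -> rel_cont n A (fun z => f z - g z) x.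
Proof. intros Hf Hg e He. destruct (Hf (e/2)) as [d1 [Hd1 H1]]; [lra|].
 destruct (Hg (e/2)) as [d2 [Hd2 H2]]; [lra|]. exists (Rmin d1 d2). split; [apply Rmin_pos; auto|].
 intros z Az Hz. specialize (H1 z Az (Rlt_le_trans _ _ _ Hz (Rmin_l _ _))).
 specialize (H2 z Az (Rlt_le_trans _ _ _ Hz (Rmin_r _ _))).
 replace (f z - g z - (f x - g x)) with ((f z - f x) + - (g z - g x)) by ring.
 pose proof (Rabs_triang (f z - f x) (- (g z - g x))). rewrite Rabs_Ropp in H. lra. Qed.

Lemma rel_opp n A f x : rel_cont n A f x -> rel_cont n A (fun z => - f z) x.
Proof. intros Hf e He. destruct (Hf e He) as [d [Hd H]]. exists d. split; auto. intros z Az Hz.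
 replace (- f z - - f x) with (- (f z - f x)) by ring. rewrite Rabs_Ropp. auto. Qed.

Lemma rel_sub n (A B : pt -> Prop) f x : (forall z, A z -> B z) -> rel_cont n B f x -> rel_cont n A f x.
Proof. intros HAB H e He. destruct (H e He) as [d [Hd H1]]. exists d; split; auto. Qed.

Lemma cont_ext n f g x : (forall z, f z = g z) -> cont_at n g x -> cont_at n f x.
Proof. intros H Hg. replace f with g; auto. apply functional_extensionality; intros; auto. Qed.

Definition Qf (n : nat) (x : pt) (al : R) (be : nat -> R) (ga : R) (A : nat -> nat -> R) (w : pt) : R :=
  al + sumR n (fun k => be k * (w k - x k)) + ga * sumR n (fun k => (w k - x k) ^ 2)
  + sumR n (fun k => sumR n (fun l => A k l * (w k - x k) * (w l - x l))).
Definition Qp (n : nat) (x : pt) (be : nat -> R) (ga : R) (A : nat -> nat -> R) (k : nat) (w : pt) : R :=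
  be k + 2 * ga * (w k - x k) + sumR n (fun l => (A k l + A l k) * (w l - x l)).
Definition Qq (ga : R) (A : nat -> nat -> R) (k l : nat) (w : pt) : R :=
  2 * ga * dl k l + A k l + A l k.

Lemma shift_coord w t j k : vadd w (vscal t (ebasis j)) k = w k + t * dl k j.
Proof. unfold vadd, vscal, ebasis, dl. reflexivity. Qed.

Lemma dl_sq n j : (j < n)%nat -> sumR n (fun k => dl k j * dl k j) = 1.
Proof. intros. rewrite (sumR_dl n (fun k => dl k j) j H). unfold dl. rewrite Nat.eqb_refl. auto. Qed.

Lemma poly_deriv (F : R -> R) a b c : (forall t, F t = a + b * t + c * t ^ 2) -> derivable_pt_lim F 0 b.
Proof. intros HF eps He. exists (mkposreal (eps / (Rabs c + 1)) ltac:(apply Rdiv_lt_0_compat; [lra| pose proof (Rabs_pos c); lra])).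
 intros h Hh Hhd. simpl in Hhd. rewrite !HF.
 replace ((a + b * (0 + h) + c * (0 + h) ^ 2 - (a + b * 0 + c * 0 ^ 2)) / h - b) with (c * h) by (field; auto).
 rewrite Rabs_mult. pose proof (Rabs_pos c). pose proof (Rabs_pos h).
 apply Rle_lt_trans with ((Rabs c + 1) * Rabs h). nra.
 replace eps with ((Rabs c + 1) * (eps / (Rabs c + 1))) by (field; lra).
 apply Rmult_lt_compat_l; lra. Qed.

Lemma Qf_shift n x al be ga A w t j : (j < n)%nat ->
  Qf n x al be ga A (vadd w (vscal t (ebasis j))) =
  Qf n x al be ga A w + t * Qp n x be ga A j w + t ^ 2 * (ga + A j j).
Proof. intros Hj. unfold Qf, Qp. rewrite !(sumR_ext n (fun k => be k * (vadd w (vscal t (ebasis j)) k - x k))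
   (fun k => be k * (w k - x k) + t * (be k * dl k j))) by (intros; rewrite shift_coord; ring).
 rewrite sumR_plus, sumR_scal, sumR_dl by auto.
 rewrite (sumR_ext n (fun k => (vadd w (vscal t (ebasis j)) k - x k) ^ 2)
   (fun k => (w k - x k) ^ 2 + (2 * t) * ((w k - x k) * dl k j) + t ^ 2 * (dl k j * dl k j))) by (intros; rewrite shift_coord; ring).
 rewrite !sumR_plus, !sumR_scal, sumR_dl, dl_sq by auto.
 rewrite (sumR_ext n (fun k => sumR n (fun l => A k l * (vadd w (vscal t (ebasis j)) k - x k) * (vadd w (vscal t (ebasis j)) l - x l)))
   (fun k => sumR n (fun l => A k l * (w k - x k) * (w l - x l)) + t * (sumR n (fun l => A k l * (w l - x l)) * dl k j)
     + t * ((A k j * (w k - x k))) + t ^ 2 * (A k j * dl k j))).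
 2:{ intros k Hk. rewrite (sumR_ext n _ (fun l => A k l * (w k - x k) * (w l - x l) + t * dl k j * (A k l * (w l - x l))
        + t * (A k l * (w k - x k) * dl l j) + t ^ 2 * dl k j * (A k l * dl l j))).
     rewrite ?sumR_plus, ?sumR_scal, ?sumR_scalr. rewrite (sumR_dl n (fun l => A k l * (w k - x k))) by auto.
     rewrite (sumR_dl n (fun l => A k l)) by auto. ring.
     intros l Hl. rewrite !shift_coord. ring. }
 rewrite !sumR_plus, !sumR_scal. rewrite (sumR_dl n (fun k => sumR n (fun l => A k l * (w l - x l)))) by auto.
 rewrite (sumR_dl n (fun k => A k j)) by auto.
 rewrite (sumR_ext n (fun l => (A j l + A l j) * (w l - x l)) (fun l => A j l * (w l - x l) + A l j * (w l - x l))) by (intros; ring).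
 rewrite sumR_plus. ring. Qed.

Lemma Qp_shift n x be ga A w t j k : (j < n)%nat ->
  Qp n x be ga A k (vadd w (vscal t (ebasis j))) = Qp n x be ga A k w + t * Qq ga A k j w.
Proof. intros Hj. unfold Qp, Qq. rewrite shift_coord.
 rewrite (sumR_ext n _ (fun l => (A k l + A l k) * (w l - x l) + t * ((A k l + A l k) * dl l j))).
 2:{ intros; rewrite shift_coord; ring. }
 rewrite sumR_plus, sumR_scal, (sumR_dl n (fun l => A k l + A l k)) by auto. ring. Qed.

Lemma Qf_partial n x al be ga A w j : (j < n)%nat ->
  is_partial (Qf n x al be ga A) j w (Qp n x be ga A j w).
Proof. intros Hj. unfold is_partial. apply (poly_deriv _ (Qf n x al be ga A w) _ (ga + A j j)).
 intros t. rewrite Qf_shift by auto. ring. Qed.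

Lemma Qp_partial n x be ga A w j k : (j < n)%nat ->
  is_partial (Qp n x be ga A k) j w (Qq ga A k j w).
Proof. intros Hj. unfold is_partial. apply (poly_deriv _ (Qp n x be ga A k w) _ 0).
 intros t. rewrite Qp_shift by auto. ring. Qed.

Lemma cont_lin n x k c w0 : (k < n)%nat -> cont_at n (fun w => c * (w k - x k)) w0.
Proof. intros. apply cont_mult. apply cont_const. apply cont_minus. apply cont_coord; auto. apply cont_const. Qed.

Lemma Qf_cont n x al be ga A w0 : cont_at n (Qf n x al be ga A) w0.
Proof. unfold Qf. apply cont_plus; [apply cont_plus; [apply cont_plus|]|].
 - apply cont_const.
 - apply cont_sumR. intros; apply cont_lin; auto.
 - apply cont_mult. apply cont_const. apply cont_sumR. intros. 
   apply (cont_ext _ _ (fun w => (w k - x k) * (w k - x k))). intros; ring.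
   apply cont_mult; apply cont_minus; try apply cont_coord; auto; apply cont_const.
 - apply cont_sumR. intros k Hk. apply cont_sumR. intros l Hl.
   apply cont_mult; [apply cont_lin; auto|]. apply cont_minus; [apply cont_coord; auto| apply cont_const].
Qed.

Lemma Qp_cont n x be ga A k w0 : (k < n)%nat -> cont_at n (Qp n x be ga A k) w0.
Proof. intros Hk. unfold Qp. apply cont_plus; [apply cont_plus|].
 - apply cont_const.
 - apply cont_lin; auto.
 - apply cont_sumR; intros; apply cont_lin; auto. Qed.

Lemma cont_on_of n Om f : (forall x, cont_at n f x) -> continuous_on n Om f.
Proof. intros H x Hx e He. destruct (H x e He) as [d [Hd H1]]. exists d; split; auto. Qed.

Lemma Q_C2 n Om x al be ga A : C2data n Om (Qf n x al be ga A) (Qp n x be ga A) (Qq ga A).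
Proof. unfold C2data. split; [|split; [|split; [|split]]].
 - apply cont_on_of. intros; apply Qf_cont.
 - intros k Hk w _. apply Qf_partial; auto.
 - intros k Hk. apply cont_on_of. intros; apply Qp_cont; auto.
 - intros k Hk j Hj w _. apply Qp_partial; auto.
 - intros k l Hk Hl. apply cont_on_of. intros; apply cont_const.
Qed.

Definition conv (a : nat -> R) (l : R) : Prop :=
  forall eps, 0 < eps -> exists N, forall m, (N <= m)%nat -> Rabs (a m - l) < eps.

Definition incr (phi : nat -> nat) : Prop := forall m, (phi m < phi (S m))%nat.

Lemma incr_lt phi : incr phi -> forall m1 m2, (m1 < m2)%nat -> (phi m1 < phi m2)%nat.
Proof. intros H m1 m2 Hm. induction Hm. apply H. specialize (H m). lia. Qed.

Lemma incr_le phi : incr phi -> forall m1 m2, (m1 <= m2)%nat -> (phi m1 <= phi m2)%nat.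
Proof. intros H m1 m2 Hm. destruct (Nat.eq_dec m1 m2). subst; lia.
 assert (m1 < m2)%nat by lia. pose proof (incr_lt phi H m1 m2 H0). lia. Qed.

Lemma incr_ge phi : incr phi -> forall m, (m <= phi m)%nat.
Proof. intros H m. induction m. lia. specialize (H m). lia. Qed.

Lemma incr_comp phi psi : incr phi -> incr psi -> incr (fun m => phi (psi m)).
Proof. intros H1 H2 m. apply incr_lt; auto. Qed.

Lemma conv_sub a l psi : incr psi -> conv a l -> conv (fun m => a (psi m)) l.
Proof. intros Hp H e He. destruct (H e He) as [N HN]. exists N. intros m Hm. apply HN.
 pose proof (incr_ge psi Hp m). lia. Qed.

Fixpoint extr (ch : nat -> nat -> nat) (m : nat) : nat :=
  match m with O => ch O O | S m' => ch (S m') (S (extr ch m')) end.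

Lemma extract (P : nat -> nat -> Prop) :
  (forall m N, exists p, (N <= p)%nat /\ P m p) ->
  exists phi, incr phi /\ forall m, P m (phi m).
Proof. intros H.
 set (ch := fun m N => epsilon (inhabits 0%nat) (fun p => (N <= p)%nat /\ P m p)).
 assert (Hch : forall m N, (N <= ch m N)%nat /\ P m (ch m N)).
 { intros m N. unfold ch. apply (epsilon_spec (inhabits 0%nat) (fun p => (N <= p)%nat /\ P m p)). apply H. }
 exists (extr ch). split.
 - intros m. simpl. destruct (Hch (S m) (S (extr ch m))). lia.
 - intros m. destruct m; simpl; apply Hch. Qed.

Lemma inv_small eps : 0 < eps -> exists N, forall m, (N <= m)%nat -> / (INR m + 1) < eps.
Proof. intros He. destruct (archimed_cor1 eps He) as [N [H1 H2]]. exists N. intros m Hm.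
 apply Rle_lt_trans with (/ INR N); auto. apply Rinv_le_contravar. apply lt_0_INR; auto.
 apply le_INR in Hm. lra. Qed.

Lemma BW1 (a : nat -> R) B : (forall m, Rabs (a m) <= B) ->
  exists phi l, incr phi /\ conv (fun m => a (phi m)) l.
Proof. intros Hb.
 destruct (Rtopology.Bolzano_Weierstrass a (fun c => -B <= c <= B) (Rtopology.compact_P3 (-B) B)) as [l Hl].
 { intros m. specialize (Hb m). apply abs_le_split in Hb. auto. }
 destruct (extract (fun m p => Rabs (a p - l) < / (INR m + 1))) as [phi [Hphi HP]].
 { intros m N. assert (Hpos : 0 < / (INR m + 1)) by (apply Rinv_0_lt_compat; pose proof (pos_INR m); lra).
   destruct (Hl (Rtopology.disc l (mkposreal _ Hpos)) N) as [p [Hp1 Hp2]].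
   { exists (mkposreal _ Hpos). intros z Hz; auto. }
   exists p. split; auto. }
 exists phi, l. split; auto. intros e He. destruct (inv_small e He) as [N HN]. exists N. intros m Hm.
 specialize (HP m). specialize (HN m Hm). lra. Qed.

Lemma BWn_aux n (z : nat -> pt) B : (forall m k, (k < n)%nat -> Rabs (z m k) <= B) ->
  forall j, (j <= n)%nat -> exists phi (l : nat -> R), incr phi /\
    forall k, (k < j)%nat -> conv (fun m => z (phi m) k) (l k).
Proof. intros Hb j. induction j; intros Hj.
 - exists (fun m => m), (fun _ => 0). split. intros m; lia. intros; lia.
 - destruct IHj as [phi [l [Hphi Hl]]]; [lia|].
   destruct (BW1 (fun m => z (phi m) j) B) as [psi [lj [Hpsi Hc]]]. { intros; apply Hb; lia. }
   exists (fun m => phi (psi m)), (fun k => if Nat.eqb k j then lj else l k). split.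
   + apply incr_comp; auto.
   + intros k Hk. destruct (Nat.eqb_spec k j).
     * subst. exact Hc.
     * apply (conv_sub (fun m => z (phi m) k)); auto. apply Hl; lia. Qed.

Lemma conv_unif n (a : nat -> pt) (l : nat -> R) : (forall k, (k < n)%nat -> conv (fun m => a m k) (l k)) ->
  forall eps, 0 < eps -> exists N, forall m, (N <= m)%nat -> forall k, (k < n)%nat -> Rabs (a m k - l k) < eps.
Proof. induction n; intros H eps He.
 - exists O. intros; lia.
 - destruct (IHn (fun k Hk => H k ltac:(lia)) eps He) as [N1 H1].
   destruct (H n ltac:(lia) eps He) as [N2 H2]. exists (Nat.max N1 N2). intros m Hm k Hk.
   destruct (Nat.eq_dec k n). subst. apply H2; lia. apply H1; lia. Qed.

Lemma sumR_const n c : sumR n (fun _ => c) = INR n * c.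
Proof. induction n; simpl sumR. simpl; ring. rewrite IHn, S_INR. ring. Qed.

Lemma BWn n (z : nat -> pt) B : (forall m k, (k < n)%nat -> Rabs (z m k) <= B) ->
  exists phi l, incr phi /\ inRn n l /\
    forall eps, 0 < eps -> exists N, forall m, (N <= m)%nat -> rdist n (z (phi m)) l < eps.
Proof. intros Hb. destruct (BWn_aux n z B Hb n (le_n n)) as [phi [l [Hphi Hl]]].
 exists phi, (fun k => if Nat.ltb k n then l k else 0). split; [auto|split].
 - intros k Hk. destruct (Nat.ltb_spec k n); [lia|auto].
 - intros eps He. set (e' := eps / (INR n + 1)).
   assert (He' : 0 < e') by (apply Rdiv_lt_0_compat; auto; pose proof (pos_INR n); lra).
   destruct (conv_unif n (fun m => z (phi m)) l Hl e' He') as [N HN]. exists N. intros m Hm.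
   unfold rdist, rnorm. 
   assert (sumR n (fun k => vsub (z (phi m)) (fun k0 => if Nat.ltb k0 n then l k0 else 0) k ^ 2) <= INR n * e' ^ 2).
   { rewrite <- sumR_const. apply sumR_le. intros k Hk. unfold vsub. destruct (Nat.ltb_spec k n); [|lia].
     specialize (HN m Hm k Hk). rewrite <- (pow2_abs (z (phi m) k - l k)).
     pose proof (Rabs_pos (z (phi m) k - l k)). apply pow_incr. lra. }
   assert (INR n * e' ^ 2 < eps ^ 2).
   { unfold e'. pose proof (pos_INR n). replace (INR n * (eps / (INR n + 1)) ^ 2) with
       (eps ^ 2 * (INR n / (INR n + 1)) * / (INR n + 1)) by (field; lra).
     assert (INR n / (INR n + 1) < 1). { apply (Rmult_lt_reg_r (INR n + 1)). lra. field_simplify; lra. }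
     assert (/ (INR n + 1) <= 1). { rewrite <- Rinv_1. apply Rinv_le_contravar; lra. }
     assert (0 <= INR n / (INR n + 1)) by (unfold Rdiv; apply Rmult_le_pos; [lra| left; apply Rinv_0_lt_compat; lra]).
     assert (0 < eps ^ 2) by (apply pow_lt; auto).
     assert (0 < / (INR n + 1)) by (apply Rinv_0_lt_compat; lra).
     assert (eps ^ 2 * (INR n / (INR n + 1)) < eps ^ 2) by nra. nra. }
   rewrite <- (sqrt_pow2 eps) by lra. apply sqrt_lt_1_alt. split; [apply sumR_nonneg; intros; apply pow2_ge_0| lra].
Qed.

Definition closedS (n : nat) (A : pt -> Prop) : Prop :=
  forall z, inRn n z -> (forall eps, 0 < eps -> exists w, A w /\ rdist n w z < eps) -> A z.

Lemma cluster n (A : pt -> Prop) x R (z : nat -> pt) :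
  (forall w, A w -> rdist n w x <= R) -> closedS n A -> (forall m, A (z m)) ->
  exists phi l, incr phi /\ A l /\
    forall eps, 0 < eps -> exists N, forall m, (N <= m)%nat -> rdist n (z (phi m)) l < eps.
Proof. intros Hb Hc Hz. destruct (BWn n z (rnorm n x + R)) as [phi [l [Hphi [Hl Hcv]]]].
 { intros m k Hk. pose proof (coord_dist n (z m) x k Hk). pose proof (Hb _ (Hz m)).
   pose proof (coord_le n x k Hk). replace (z m k) with (x k + (z m k - x k)) by ring.
   pose proof (Rabs_triang (x k) (z m k - x k)). lra. }
 exists phi, l. split; auto. split; auto. apply Hc; auto. intros e He. destruct (Hcv e He) as [N HN].
 exists (z (phi N)). split; auto. Qed.

Lemma EVT n (A : pt -> Prop) x R f :
  (forall w, A w -> rdist n w x <= R) -> closedS n A -> (exists z, A z) ->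
  (forall z, A z -> rel_cont n A f z) ->
  exists z, A z /\ forall w, A w -> f w <= f z.
Proof. intros Hb Hc [z0 Hz0] Hf.
 assert (Hbd : exists M, forall w, A w -> f w <= M).
 { apply NNPP. intros Hn.
   assert (H1 : forall m : nat, exists w, A w /\ INR m < f w).
   { intros m. apply NNPP. intros H2. apply Hn. exists (INR m). intros w Hw.
     apply Rnot_lt_le. intros H3. apply H2. exists w; auto. }
   set (z := fun m => proj1_sig (constructive_indefinite_description _ (H1 m))).
   assert (Hz : forall m, A (z m) /\ INR m < f (z m)).
   { intros m. unfold z. apply (proj2_sig (constructive_indefinite_description _ (H1 m))). }
   destruct (cluster n A x R z Hb Hc (fun m => proj1 (Hz m))) as [phi [l [Hphi [Hl Hcv]]]].
   destruct (Hf l Hl 1 ltac:(lra)) as [d [Hd Hd1]].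
   destruct (Hcv d Hd) as [N HN].
   destruct (archimed (f l + 1)) as [Hup _].
   set (m := Nat.max N (Z.to_nat (up (f l + 1)))).
   assert (INR m >= f l + 1).
   { unfold m. destruct (ZArith_dec.Z_lt_le_dec (up (f l + 1)) 0).
     - pose proof (pos_INR (Nat.max N (Z.to_nat (up (f l + 1))))). apply IZR_lt in l0. lra.
     - assert (IZR (up (f l + 1)) = INR (Z.to_nat (up (f l + 1)))). { rewrite INR_IZR_INZ. rewrite Z2Nat.id; auto. }
       assert (INR (Z.to_nat (up (f l + 1))) <= INR (Nat.max N (Z.to_nat (up (f l + 1))))) by (apply le_INR; lia).
       lra. }
   specialize (HN m (Nat.le_max_l _ _)). specialize (Hd1 _ (proj1 (Hz (phi m))) HN).
   pose proof (proj2 (Hz (phi m))). pose proof (le_INR _ _ (incr_ge phi Hphi m)).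
   apply abs_lt_split in Hd1. lra. }
 destruct Hbd as [M HM].
 destruct (completeness (fun y => exists w, A w /\ y = f w)) as [S [HS1 HS2]].
 { exists M. intros y [w [Hw ->]]. auto. }
 { exists (f z0). exists z0; auto. }
 assert (Hub : forall w, A w -> f w <= S). { intros w Hw. apply HS1. exists w; auto. }
 assert (H1 : forall m : nat, exists w, A w /\ S - / (INR m + 1) < f w).
 { intros m. apply NNPP. intros H2.
   assert (Hpos : 0 < / (INR m + 1)) by (apply Rinv_0_lt_compat; pose proof (pos_INR m); lra).
   assert (S <= S - / (INR m + 1)). { apply HS2. intros y [w [Hw ->]]. apply Rnot_lt_le. intros H3. apply H2. exists w; auto. }
   lra. }
 set (z := fun m => proj1_sig (constructive_indefinite_description _ (H1 m))).
 assert (Hz : forall m, A (z m) /\ S - / (INR m + 1) < f (z m)).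
 { intros m. unfold z. apply (proj2_sig (constructive_indefinite_description _ (H1 m))). }
 destruct (cluster n A x R z Hb Hc (fun m => proj1 (Hz m))) as [phi [l [Hphi [Hl Hcv]]]].
 exists l. split; auto. intros w Hw. apply Rle_trans with S; auto.
 apply Rnot_lt_le. intros Hlt. set (eta := S - f l).
 destruct (Hf l Hl (eta/2) ltac:(unfold eta; lra)) as [d [Hd Hd1]].
 destruct (Hcv d Hd) as [N1 HN1]. destruct (inv_small (eta/2) ltac:(unfold eta; lra)) as [N2 HN2].
 set (m := Nat.max N1 N2).
 specialize (HN1 m (Nat.le_max_l _ _)). specialize (Hd1 _ (proj1 (Hz (phi m))) HN1).
 pose proof (proj2 (Hz (phi m))). pose proof (incr_ge phi Hphi m).
 specialize (HN2 (phi m) ltac:(unfold m in *; lia)).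
 apply abs_lt_split in Hd1. unfold eta in *. lra.
Qed.

Lemma EVT_min n (A : pt -> Prop) x R f :
  (forall w, A w -> rdist n w x <= R) -> closedS n A -> (exists z, A z) ->
  (forall z, A z -> rel_cont n A f z) ->
  exists z, A z /\ forall w, A w -> f z <= f w.
Proof. intros Hb Hc Hne Hf. destruct (EVT n A x R (fun w => - f w) Hb Hc Hne) as [z [Hz H]].
 intros z Hz. apply rel_opp; auto. exists z. split; auto. intros w Hw. specialize (H w Hw). lra. Qed.

Definition tco (n : nat) (e x w : pt) : R := sumR n (fun k => e k * (w k - x k)).

Lemma Qf_cone n x al b ga mu e w :
  Qf n x al (fun k => b * e k) ga (fun k l => mu * (e k * e l)) w =
  al + b * tco n e x w + ga * rdist n w x ^ 2 + mu * tco n e x w ^ 2.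
Proof. unfold Qf, tco. rewrite rdist_sq.
 rewrite (sumR_ext n (fun k => b * e k * (w k - x k)) (fun k => b * (e k * (w k - x k)))) by (intros; ring).
 rewrite sumR_scal.
 rewrite (sumR_ext n (fun k => sumR n (fun l => mu * (e k * e l) * (w k - x k) * (w l - x l)))
   (fun k => (mu * (e k * (w k - x k))) * sumR n (fun l => e l * (w l - x l)))).
 2:{ intros k Hk. rewrite <- sumR_scal. apply sumR_ext; intros; ring. }
 rewrite sumR_scalr, sumR_scal. ring. Qed.

Lemma Qp_cone n x b ga mu e r0 x0 k : (forall k, x0 k - x k = r0 * e k) -> nsq n e = 1 ->
  Qp n x (fun k => b * e k) ga (fun k l => mu * (e k * e l)) k x0 = (b + 2 * ga * r0 + 2 * mu * r0) * e k.
Proof. intros Hx He. unfold Qp. rewrite Hx.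
 rewrite (sumR_ext n _ (fun l => (2 * mu * r0 * e k) * (e l ^ 2))) by (intros; rewrite Hx; ring).
 rewrite sumR_scal. fold (nsq n e). rewrite He. ring. Qed.

Lemma inflap_cone n ga mu e G x0 : nsq n e = 1 -> G <> 0 ->
  inf_lap n (fun k _ => G * e k) (Qq ga (fun k l => mu * (e k * e l))) x0 = 2 * ga + 2 * mu.
Proof. intros He HG. unfold inf_lap, grad_sq, Qq.
 rewrite (sumR_ext n (fun k => (G * e k) ^ 2) (fun k => G ^ 2 * e k ^ 2)) by (intros; ring).
 rewrite sumR_scal. fold (nsq n e). rewrite He.
 rewrite (sumR_ext n _ (fun k => (G^2 * (2 * ga) * e k) * e k + (G^2 * (2 * mu) * e k ^ 2) * nsq n e)).
 2:{ intros k Hk. unfold nsq. rewrite <- sumR_scal.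
     rewrite (sumR_ext n _ (fun l => G ^ 2 * (2 * ga) * e k * (e l * dl k l) + G ^ 2 * (2 * mu) * e k ^ 2 * (e l ^ 2))).
     rewrite sumR_plus, sumR_scal. rewrite (sumR_ext n (fun l => e l * dl k l) (fun l => e l * dl l k)).
     rewrite sumR_dl by auto. auto.
     intros l Hl. unfold dl. rewrite Nat.eqb_sym. auto.
     intros; ring. }
 rewrite He. rewrite sumR_plus, !sumR_scalr. 
 rewrite (sumR_ext n (fun k => G ^ 2 * (2 * ga) * e k * e k) (fun k => (G^2 * (2 * ga)) * e k ^ 2)) by (intros; ring).
 rewrite !sumR_scal. fold (nsq n e). rewrite He. field. auto. Qed.

Lemma nsq_one_exists n e : nsq n e = 1 -> exists k, (k < n)%nat /\ e k <> 0.
Proof. intros H. apply NNPP. intros Hn. assert (nsq n e = 0).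
 { unfold nsq. rewrite (sumR_ext _ _ (fun _ => 0)). apply sumR_zero. intros k Hk.
   destruct (Req_dec (e k) 0). rewrite H0; ring. exfalso; apply Hn; eauto. }
 lra. Qed.

Lemma rnorm_one n e : nsq n e = 1 -> rnorm n e = 1.
Proof. intros H. unfold rnorm. fold (nsq n e). rewrite H. apply sqrt_1. Qed.

Lemma cone_ineq t s r0 : 0 < r0 -> r0 / 2 <= t -> t <= s -> 0 <= s ->
  s <= t + (s ^ 2 - t ^ 2) / r0.
Proof. intros Hr Ht Hts Hs.
 assert (0 <= (s - t) * (s + t - r0)) by (apply Rmult_le_pos; lra).
 assert (t + (s ^ 2 - t ^ 2) / r0 - s = (s - t) * (s + t - r0) / r0) by (field; lra).
 assert (0 <= (s - t) * (s + t - r0) / r0) by (unfold Rdiv; apply Rmult_le_pos; [lra| left; apply Rinv_0_lt_compat; lra]). lra. Qed.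

Lemma inf_lap_ext n p p' q x0 : (forall k, (k < n)%nat -> p k x0 = p' k x0) ->
  inf_lap n p q x0 = inf_lap n p' q x0.
Proof. intros H. unfold inf_lap, grad_sq.
 rewrite (sumR_ext n (fun k => sumR n (fun l => p k x0 * p l x0 * q k l x0)) (fun k => sumR n (fun l => p' k x0 * p' l x0 * q k l x0))).
 rewrite (sumR_ext n (fun k => p k x0 ^ 2) (fun k => p' k x0 ^ 2)). auto.
 intros k Hk; rewrite H; auto.
 intros k Hk; apply sumR_ext; intros l Hl. rewrite !H; auto. Qed.

Lemma cont_phi0 n x a b c w0 : cont_at n (fun w => a + b * rdist n w x - c * rdist n w x ^ 2) w0.
Proof. apply cont_minus. apply cont_plus. apply cont_const. apply cont_mult. apply cont_const. apply cont_rdist.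
 apply cont_mult. apply cont_const. apply (cont_ext _ _ (fun w => rdist n w x * rdist n w x)). intros; ring.
 apply cont_mult; apply cont_rdist. Qed.

Lemma cball_closed n x R : closedS n (cball n x R).
Proof. intros z Hz Hcl. split; auto. apply Rnot_lt_le. intros H.
 destruct (Hcl (rdist n z x - R)) as [w [[Hw1 Hw2] Hw3]]; [lra|].
 pose proof (rdist_triangle n z w x). rewrite (rdist_sym n z w) in H0. lra. Qed.

Lemma sphere_closed n x R : closedS n (sphere n x R).
Proof. intros z Hz Hcl. split; auto. apply Rle_antisym; apply Rnot_lt_le; intros H.
 - destruct (Hcl (rdist n z x - R)) as [w [[Hw1 Hw2] Hw3]]; [lra|].
   pose proof (rdist_triangle n z w x). rewrite (rdist_sym n z w) in H0. lra.
 - destruct (Hcl (R - rdist n z x)) as [w [[Hw1 Hw2] Hw3]]; [lra|].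
   pose proof (rdist_triangle n w z x). lra. Qed.

Lemma tco_split n e x x0 w : tco n e x w = tco n e x x0 + tco n e x0 w.
Proof. unfold tco. rewrite <- sumR_plus. apply sumR_ext; intros; ring. Qed.

Lemma tco_bound n e x w : Rabs (tco n e x w) <= rnorm n e * rdist n w x.
Proof. apply (dot_le n e (vsub w x)). Qed.

Lemma tco_self n e x x0 r0 : (forall k, x0 k - x k = r0 * e k) -> nsq n e = 1 -> tco n e x x0 = r0.
Proof. intros H He. unfold tco. rewrite (sumR_ext n _ (fun k => r0 * e k ^ 2)) by (intros; rewrite H; ring).
 rewrite sumR_scal. fold (nsq n e). rewrite He. ring. Qed.

Lemma unit_dir n x x0 r0 : 0 < r0 -> rdist n x0 x = r0 ->
  (forall k, x0 k - x k = r0 * ((x0 k - x k) / r0)) /\ nsq n (fun k => (x0 k - x k) / r0) = 1.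
Proof. intros Hr Hd. split. intros; field; lra.
 unfold nsq. rewrite (sumR_ext n _ (fun k => / r0 ^ 2 * (x0 k - x k) ^ 2)) by (intros; field; lra).
 rewrite sumR_scal. rewrite <- rdist_sq. rewrite Hd. field. lra. Qed.

Lemma comp_plus n U u v y rho K
 (HU : forall z, U z -> inRn n z)
 (HK : forall z, U z -> rdist n z y < rho -> Rabs (u z - v z) <= K)
 (HB : forall z, inRn n z -> rdist n z y < rho -> U z)
 (Hc : forall z, inRn n z -> rdist n z y < rho -> rel_cont n (fun w => inRn n w /\ rdist n w y < rho) u z)
 (Hsub : forall phi p q x0, C2data n U phi p q -> U x0 -> loc_max n U (fun x => u x - phi x) x0 ->
     forall L, inf_lap_plus n p q x0 L -> - L + u x0 - v x0 <= 0)
 x R a b :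
 0 <= K -> inRn n x -> 0 < R -> rdist n x y + R < rho -> (K+1) * R < b -> u x <= a ->
 (forall w, sphere n x R w -> u w <= a + b * R - (K+1)/2 * R^2) ->
 forall w, cball n x R w -> u w <= a + b * rdist n w x - (K+1)/2 * rdist n w x ^ 2.
Proof.
 intros HK0 Hx HR HxR Hb Hux Hsph w1 Hw1. apply Rnot_lt_le. intros Hlt.
 set (c := K + 1). fold c in Hb, Hsph, Hlt.
 set (phi0 := fun w => a + b * rdist n w x - c/2 * rdist n w x ^ 2).
 assert (Hcb : forall w, cball n x R w -> inRn n w /\ rdist n w y < rho).
 { intros w [Hw1' Hw2']. split; auto. pose proof (rdist_triangle n w x y). lra. }
 destruct (EVT n (cball n x R) x R (fun w => u w - phi0 w)) as [x0 [Hx0 Hmax]].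
 - intros w Hw. apply Hw.
 - apply cball_closed.
 - exists x. split; auto. rewrite rdist_refl. lra.
 - intros z Hz. apply rel_minus. apply (rel_sub _ _ (fun w => inRn n w /\ rdist n w y < rho)); auto.
   apply Hc; apply Hcb; auto. apply cont_rel. apply cont_phi0.
 - pose proof (Hmax w1 Hw1) as Hg. unfold phi0 in Hg, Hlt.
   set (r0 := rdist n x0 x).
   destruct Hx0 as [Hx0i Hx0R]. fold r0 in Hx0R.
   assert (Hr0 : 0 < r0).
   { destruct (Req_dec r0 0) as [E|E].
     - exfalso. assert (x0 = x) by (apply (rdist_zero_eq n); auto). subst x0.
       rewrite rdist_refl in Hg. lra.
     - pose proof (rdist_nonneg n x0 x). fold r0 in H. lra. }
   assert (Hr0R : r0 < R).
   { destruct (Req_dec r0 R) as [E|E]; [|lra]. exfalso.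
     assert (sphere n x R x0) by (split; auto). specialize (Hsph _ H). fold r0 in Hg. rewrite E in Hg. lra. }
   set (e := fun k => (x0 k - x k) / r0).
   destruct (unit_dir n x x0 r0 Hr0 eq_refl) as [Hxe He]. fold e in Hxe, He.
   set (ga := b / r0 - c / 2). set (mu := - (b / r0)).
   set (phi := Qf n x a (fun k => b * e k) ga (fun k l => mu * (e k * e l))).
   assert (Hb0 : 0 < b). { unfold c in Hb. nra. }
   assert (Hphi_ge : forall w, rdist n w x0 < r0 / 2 -> phi0 w <= phi w).
   { intros w Hw. unfold phi, phi0. rewrite Qf_cone.
     pose proof (tco_split n e x x0 w). rewrite (tco_self n e x x0 r0 Hxe He) in H.
     pose proof (tco_bound n e x0 w). pose proof (tco_bound n e x w). rewrite rnorm_one in H0, H1 by auto.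
     apply abs_le_split in H0. apply abs_le_split in H1.
     pose proof (rdist_nonneg n w x).
     pose proof (cone_ineq (tco n e x w) (rdist n w x) r0 Hr0 ltac:(lra) ltac:(lra) H2).
     unfold ga, mu.
     assert (a + b * tco n e x w + (b / r0 - c / 2) * rdist n w x ^ 2 + - (b / r0) * tco n e x w ^ 2
        - (a + b * rdist n w x - c / 2 * rdist n w x ^ 2) =
        b * (tco n e x w + (rdist n w x ^ 2 - tco n e x w ^ 2) / r0 - rdist n w x)) by (field; lra).
     assert (0 <= b * (tco n e x w + (rdist n w x ^ 2 - tco n e x w ^ 2) / r0 - rdist n w x))
       by (apply Rmult_le_pos; lra).
     lra. }
   assert (Hphi_eq : phi x0 = phi0 x0).
   { unfold phi, phi0. rewrite Qf_cone. rewrite (tco_self n e x x0 r0 Hxe He). fold r0.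
     unfold ga, mu. field. lra. }
   assert (Hloc : loc_max n U (fun w => u w - phi w) x0).
   { exists (Rmin (R - r0) (r0 / 2)). split. apply Rmin_pos; lra.
     intros w Uw Hw. pose proof (Rmin_l (R - r0) (r0/2)). pose proof (Rmin_r (R - r0) (r0/2)).
     assert (cball n x R w). { split. apply HU; auto. pose proof (rdist_triangle n w x0 x). fold r0 in H1. lra. }
     specialize (Hmax w H1). specialize (Hphi_ge w ltac:(lra)). simpl in Hmax. lra. }
   assert (HU0 : U x0) by (apply HB; auto; apply (Hcb x0); split; auto).
   set (G := b + 2 * ga * r0 + 2 * mu * r0).
   assert (HG : G = b - c * r0) by (unfold G, ga, mu; field; lra).
   assert (HG0 : 0 < G). { rewrite HG. unfold c in *. nra. }
   set (p := Qp n x (fun k => b * e k) ga (fun k l => mu * (e k * e l))).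
   set (q := Qq ga (fun k l => mu * (e k * e l))).
   assert (Hp : forall k, p k x0 = G * e k). { intros k. unfold p. rewrite (Qp_cone n x b ga mu e r0 x0 k Hxe He). auto. }
   assert (HL : inf_lap n p q x0 = - c).
   { rewrite (inf_lap_ext n p (fun k _ => G * e k) q x0) by (intros; apply Hp).
     unfold q. rewrite inflap_cone by (auto; lra). unfold ga, mu. field. lra. }
   assert (Hng : ~ grad_zero n p x0).
   { intros Hz. destruct (nsq_one_exists n e He) as [k [Hk Hek]]. specialize (Hz k Hk). rewrite Hp in Hz.
     apply Rmult_integral in Hz. destruct Hz; [lra|auto]. }
   pose proof (Hsub phi p q x0 (Q_C2 n U x a _ ga _) HU0 Hloc (inf_lap n p q x0) (or_introl (conj Hng eq_refl))).
   rewrite HL in H. specialize (HK x0 HU0 (proj2 (Hcb x0 ltac:(split; auto)))).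
   apply abs_le_split in HK. unfold c in H. lra.
Qed.

Lemma comp_minus n U u v y rho K
 (HU : forall z, U z -> inRn n z)
 (HK : forall z, U z -> rdist n z y < rho -> Rabs (u z - v z) <= K)
 (HB : forall z, inRn n z -> rdist n z y < rho -> U z)
 (Hc : forall z, inRn n z -> rdist n z y < rho -> rel_cont n (fun w => inRn n w /\ rdist n w y < rho) u z)
 (Hsup : forall phi p q x0, C2data n U phi p q -> U x0 -> loc_min n U (fun x => u x - phi x) x0 ->
     forall L, inf_lap_minus n p q x0 L -> - L + u x0 - v x0 >= 0)
 x R a b :
 0 <= K -> inRn n x -> 0 < R -> rdist n x y + R < rho -> (K+1) * R < b -> a <= u x ->
 (forall w, sphere n x R w -> a - b * R + (K+1)/2 * R^2 <= u w) ->
 forall w, cball n x R w -> a - b * rdist n w x + (K+1)/2 * rdist n w x ^ 2 <= u w.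
Proof.
 intros HK0 Hx HR HxR Hb Hux Hsph w1 Hw1. apply Rnot_lt_le. intros Hlt.
 set (c := K + 1). fold c in Hb, Hsph, Hlt.
 set (phi0 := fun w => a - b * rdist n w x + c/2 * rdist n w x ^ 2).
 assert (Hcb : forall w, cball n x R w -> inRn n w /\ rdist n w y < rho).
 { intros w [Hw1' Hw2']. split; auto. pose proof (rdist_triangle n w x y). lra. }
 destruct (EVT_min n (cball n x R) x R (fun w => u w - phi0 w)) as [x0 [Hx0 Hmin]].
 - intros w Hw. apply Hw.
 - apply cball_closed.
 - exists x. split; auto. rewrite rdist_refl. lra.
 - intros z Hz. apply rel_minus. apply (rel_sub _ _ (fun w => inRn n w /\ rdist n w y < rho)); auto.
   apply Hc; apply Hcb; auto. apply cont_rel.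
   apply (cont_ext _ _ (fun w => a + (- b) * rdist n w x - (- (c / 2)) * rdist n w x ^ 2)). intros; unfold phi0; ring.
   apply cont_phi0.
 - pose proof (Hmin w1 Hw1) as Hg. unfold phi0 in Hg, Hlt.
   set (r0 := rdist n x0 x).
   destruct Hx0 as [Hx0i Hx0R]. fold r0 in Hx0R.
   assert (Hr0 : 0 < r0).
   { destruct (Req_dec r0 0) as [E|E].
     - exfalso. assert (x0 = x) by (apply (rdist_zero_eq n); auto). subst x0.
       rewrite rdist_refl in Hg. lra.
     - pose proof (rdist_nonneg n x0 x). fold r0 in H. lra. }
   assert (Hr0R : r0 < R).
   { destruct (Req_dec r0 R) as [E|E]; [|lra]. exfalso.
     assert (sphere n x R x0) by (split; auto). specialize (Hsph _ H). fold r0 in Hg. rewrite E in Hg. lra. }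
   set (e := fun k => (x0 k - x k) / r0).
   destruct (unit_dir n x x0 r0 Hr0 eq_refl) as [Hxe He]. fold e in Hxe, He.
   set (ga := - (b / r0 - c / 2)). set (mu := b / r0).
   set (phi := Qf n x a (fun k => (- b) * e k) ga (fun k l => mu * (e k * e l))).
   assert (Hb0 : 0 < b). { unfold c in Hb. nra. }
   assert (Hphi_le : forall w, rdist n w x0 < r0 / 2 -> phi w <= phi0 w).
   { intros w Hw. unfold phi, phi0. rewrite Qf_cone.
     pose proof (tco_split n e x x0 w). rewrite (tco_self n e x x0 r0 Hxe He) in H.
     pose proof (tco_bound n e x0 w). pose proof (tco_bound n e x w). rewrite rnorm_one in H0, H1 by auto.
     apply abs_le_split in H0. apply abs_le_split in H1.
     pose proof (rdist_nonneg n w x).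
     pose proof (cone_ineq (tco n e x w) (rdist n w x) r0 Hr0 ltac:(lra) ltac:(lra) H2).
     unfold ga, mu.
     assert ((a - b * rdist n w x + c / 2 * rdist n w x ^ 2) - (a + - b * tco n e x w + - (b / r0 - c / 2) * rdist n w x ^ 2 + (b / r0) * tco n e x w ^ 2) =
        b * (tco n e x w + (rdist n w x ^ 2 - tco n e x w ^ 2) / r0 - rdist n w x)) by (field; lra).
     assert (0 <= b * (tco n e x w + (rdist n w x ^ 2 - tco n e x w ^ 2) / r0 - rdist n w x))
       by (apply Rmult_le_pos; lra).
     lra. }
   assert (Hphi_eq : phi x0 = phi0 x0).
   { unfold phi, phi0. rewrite Qf_cone. rewrite (tco_self n e x x0 r0 Hxe He). fold r0.
     unfold ga, mu. field. lra. }
   assert (Hloc : loc_min n U (fun w => u w - phi w) x0).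
   { exists (Rmin (R - r0) (r0 / 2)). split. apply Rmin_pos; lra.
     intros w Uw Hw. pose proof (Rmin_l (R - r0) (r0/2)). pose proof (Rmin_r (R - r0) (r0/2)).
     assert (cball n x R w). { split. apply HU; auto. pose proof (rdist_triangle n w x0 x). fold r0 in H1. lra. }
     specialize (Hmin w H1). specialize (Hphi_le w ltac:(lra)). simpl in Hmin. lra. }
   assert (HU0 : U x0) by (apply HB; auto; apply (Hcb x0); split; auto).
   set (G := - b + 2 * ga * r0 + 2 * mu * r0).
   assert (HG : G = - (b - c * r0)) by (unfold G, ga, mu; field; lra).
   assert (HG0 : G < 0). { rewrite HG. unfold c in *. nra. }
   set (p := Qp n x (fun k => (- b) * e k) ga (fun k l => mu * (e k * e l))).
   set (q := Qq ga (fun k l => mu * (e k * e l))).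
   assert (Hp : forall k, p k x0 = G * e k). { intros k. unfold p. rewrite (Qp_cone n x (- b) ga mu e r0 x0 k Hxe He). auto. }
   assert (HL : inf_lap n p q x0 = c).
   { rewrite (inf_lap_ext n p (fun k _ => G * e k) q x0) by (intros; apply Hp).
     unfold q. rewrite inflap_cone by (auto; lra). unfold ga, mu. field. lra. }
   assert (Hng : ~ grad_zero n p x0).
   { intros Hz. destruct (nsq_one_exists n e He) as [k [Hk Hek]]. specialize (Hz k Hk). rewrite Hp in Hz.
     apply Rmult_integral in Hz. destruct Hz; [lra|auto]. }
   pose proof (Hsup phi p q x0 (Q_C2 n U x a _ ga _) HU0 Hloc (inf_lap n p q x0) (or_introl (conj Hng eq_refl))).
   rewrite HL in H. specialize (HK x0 HU0 (proj2 (Hcb x0 ltac:(split; auto)))).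
   apply abs_le_split in HK. unfold c in H. lra.
Qed.

Lemma sphere_nonempty n x R : (1 <= n)%nat -> inRn n x -> 0 <= R -> exists z, sphere n x R z.
Proof. intros Hn Hx HR. exists (vadd x (vscal R (ebasis 0))). split.
 - intros k Hk. unfold vadd, vscal, ebasis. rewrite Hx by auto. destruct (Nat.eqb_spec k 0); [lia|ring].
 - unfold rdist, rnorm. rewrite (sumR_ext n _ (fun k => R ^ 2 * (dl k 0 * dl k 0))).
   rewrite sumR_scal, dl_sq by lia. rewrite Rmult_1_r. apply sqrt_pow2; auto.
   intros k Hk. unfold vsub. rewrite shift_coord. ring. Qed.

Lemma sph_max_spec n u y rho x R :
  (1 <= n)%nat -> inRn n x -> 0 < R -> rdist n x y + R < rho ->
  (forall z, inRn n z -> rdist n z y < rho -> rel_cont n (fun w => inRn n w /\ rdist n w y < rho) u z) ->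
  is_max_on (sphere n x R) u (sph_max n u x R).
Proof. intros Hn Hx HR HxR Hc. unfold sph_max. apply epsilon_spec.
 assert (Hs : forall w, sphere n x R w -> inRn n w /\ rdist n w y < rho).
 { intros w [H1 H2]. split; auto. pose proof (rdist_triangle n w x y). lra. }
 destruct (EVT n (sphere n x R) x R u) as [z [Hz Hm]].
 - intros w [_ H]; lra.
 - apply sphere_closed.
 - apply sphere_nonempty; auto; lra.
 - intros z Hz. apply (rel_sub _ _ (fun w => inRn n w /\ rdist n w y < rho)); auto. apply Hc; apply Hs; auto.
 - exists (u z). split; eauto. Qed.

Lemma sph_min_spec n u y rho x R :
  (1 <= n)%nat -> inRn n x -> 0 < R -> rdist n x y + R < rho ->
  (forall z, inRn n z -> rdist n z y < rho -> rel_cont n (fun w => inRn n w /\ rdist n w y < rho) u z) ->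
  is_min_on (sphere n x R) u (sph_min n u x R).
Proof. intros Hn Hx HR HxR Hc. unfold sph_min. apply epsilon_spec.
 assert (Hs : forall w, sphere n x R w -> inRn n w /\ rdist n w y < rho).
 { intros w [H1 H2]. split; auto. pose proof (rdist_triangle n w x y). lra. }
 destruct (EVT_min n (sphere n x R) x R u) as [z [Hz Hm]].
 - intros w [_ H]; lra.
 - apply sphere_closed.
 - apply sphere_nonempty; auto; lra.
 - intros z Hz. apply (rel_sub _ _ (fun w => inRn n w /\ rdist n w y < rho)); auto. apply Hc; apply Hs; auto.
 - exists (u z). split; eauto. Qed.

Definition kx (n : nat) (c : R) (u : pt -> R) (x : pt) (rr : R) : R :=
  Rmax ((sph_max n u x rr - u x) / rr + c * rr / 2) ((c + 1) * rr).
Definition hx (n : nat) (c : R) (u : pt -> R) (x : pt) (rr : R) : R :=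
  Rmax ((u x - sph_min n u x rr) / rr + c * rr / 2) ((c + 1) * rr).

Lemma CB_plus n U u v y rho K
 (HU : forall z, U z -> inRn n z)
 (HK : forall z, U z -> rdist n z y < rho -> Rabs (u z - v z) <= K)
 (HB : forall z, inRn n z -> rdist n z y < rho -> U z)
 (Hc : forall z, inRn n z -> rdist n z y < rho -> rel_cont n (fun w => inRn n w /\ rdist n w y < rho) u z)
 (Hsub : forall phi p q x0, C2data n U phi p q -> U x0 -> loc_max n U (fun x => u x - phi x) x0 ->
     forall L, inf_lap_plus n p q x0 L -> - L + u x0 - v x0 <= 0)
 x R : (1 <= n)%nat -> 0 <= K -> inRn n x -> 0 < R -> rdist n x y + R < rho ->
 forall w, cball n x R w -> u w <= u x + kx n (K+1) u x R * rdist n w x.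
Proof. intros Hn HK0 Hx HR HxR w Hw.
 pose proof (Rmax_l ((sph_max n u x R - u x) / R + (K+1) * R / 2) ((K+1 + 1) * R)).
 pose proof (Rmax_r ((sph_max n u x R - u x) / R + (K+1) * R / 2) ((K+1 + 1) * R)).
 fold (kx n (K+1) u x R) in H, H0.
 assert (Hk : (K + 1) * R < kx n (K+1) u x R) by nra.
 pose proof (comp_plus n U u v y rho K HU HK HB Hc Hsub x R (u x) (kx n (K+1) u x R) HK0 Hx HR HxR Hk ltac:(lra)) as Hcp.
 assert (Hw' : u w <= u x + kx n (K + 1) u x R * rdist n w x - (K + 1) / 2 * rdist n w x ^ 2).
 { apply Hcp; auto. intros z Hz. destruct (sph_max_spec n u y rho x R Hn Hx HR HxR Hc) as [_ Hm].
   specialize (Hm z Hz).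
   assert ((sph_max n u x R - u x) / R * R = sph_max n u x R - u x) by (field; lra).
   assert (kx n (K+1) u x R * R >= ((sph_max n u x R - u x) / R + (K + 1) * R / 2) * R) by (apply Rle_ge, Rmult_le_compat_r; lra).
   nra. }
 assert (0 <= (K + 1) / 2 * rdist n w x ^ 2). { apply Rmult_le_pos. lra. apply pow2_ge_0. }
 lra. Qed.

Lemma CB_minus n U u v y rho K
 (HU : forall z, U z -> inRn n z)
 (HK : forall z, U z -> rdist n z y < rho -> Rabs (u z - v z) <= K)
 (HB : forall z, inRn n z -> rdist n z y < rho -> U z)
 (Hc : forall z, inRn n z -> rdist n z y < rho -> rel_cont n (fun w => inRn n w /\ rdist n w y < rho) u z)
 (Hsup : forall phi p q x0, C2data n U phi p q -> U x0 -> loc_min n U (fun x => u x - phi x) x0 ->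
     forall L, inf_lap_minus n p q x0 L -> - L + u x0 - v x0 >= 0)
 x R : (1 <= n)%nat -> 0 <= K -> inRn n x -> 0 < R -> rdist n x y + R < rho ->
 forall w, cball n x R w -> u x - hx n (K+1) u x R * rdist n w x <= u w.
Proof. intros Hn HK0 Hx HR HxR w Hw.
 pose proof (Rmax_l ((u x - sph_min n u x R) / R + (K+1) * R / 2) ((K+1 + 1) * R)).
 pose proof (Rmax_r ((u x - sph_min n u x R) / R + (K+1) * R / 2) ((K+1 + 1) * R)).
 fold (hx n (K+1) u x R) in H, H0.
 assert (Hk : (K + 1) * R < hx n (K+1) u x R) by nra.
 pose proof (comp_minus n U u v y rho K HU HK HB Hc Hsup x R (u x) (hx n (K+1) u x R) HK0 Hx HR HxR Hk ltac:(lra)) as Hcp.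
 assert (Hw' : u x - hx n (K + 1) u x R * rdist n w x + (K + 1) / 2 * rdist n w x ^ 2 <= u w).
 { apply Hcp; auto. intros z Hz. destruct (sph_min_spec n u y rho x R Hn Hx HR HxR Hc) as [_ Hm].
   specialize (Hm z Hz).
   assert ((u x - sph_min n u x R) / R * R = u x - sph_min n u x R) by (field; lra).
   assert (hx n (K+1) u x R * R >= ((u x - sph_min n u x R) / R + (K + 1) * R / 2) * R) by (apply Rle_ge, Rmult_le_compat_r; lra).
   nra. }
 assert (0 <= (K + 1) / 2 * rdist n w x ^ 2). { apply Rmult_le_pos. lra. apply pow2_ge_0. }
 lra. Qed.

Definition Kf (f : R -> R) (c rr : R) : R := Rmax (f rr + c * rr / 2) ((c + 1) * rr).

Lemma Kf_pos f c rr : 0 < c -> 0 < rr -> (c + 1) * rr <= Kf f c rr.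
Proof. intros. unfold Kf. apply Rmax_r. Qed.

Lemma inf_ex (k : R -> R) R1 : 0 < R1 -> (forall rr, 0 < rr < R1 -> 0 <= k rr) ->
  exists S, 0 <= S /\ (forall rr, 0 < rr < R1 -> S <= k rr) /\
    (forall eps, 0 < eps -> exists rr, 0 < rr < R1 /\ k rr < S + eps).
Proof. intros HR1 Hk.
 destruct (completeness (fun z => exists rr, 0 < rr < R1 /\ z = - k rr)) as [m [Hm1 Hm2]].
 { exists 0. intros z [rr [Hr ->]]. specialize (Hk rr Hr). lra. }
 { exists (- k (R1/2)). exists (R1/2). split; auto. lra. }
 exists (- m). split; [|split].
 - assert (m <= 0). { apply Hm2. intros z [rr [Hr ->]]. specialize (Hk rr Hr). lra. } lra.
 - intros rr Hr. assert (- k rr <= m) by (apply Hm1; eauto). lra.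
 - intros eps He. apply NNPP. intros Hn.
   assert (m <= m - eps). { apply Hm2. intros z [rr [Hr ->]]. apply Rnot_lt_le. intros H. apply Hn.
     exists rr. split; auto. lra. } lra. Qed.

Lemma lim_of_bounds f S : (forall eps, 0 < eps -> exists d, 0 < d /\ forall r, 0 < r < d -> f r < S + eps) ->
  (forall eps, 0 < eps -> exists d, 0 < d /\ forall r, 0 < r < d -> S - eps < f r) -> lim_right0 f S.
Proof. intros H1 H2 eps He. destruct (H1 eps He) as [d1 [Hd1 Hu]]. destruct (H2 eps He) as [d2 [Hd2 Hl]].
 exists (Rmin d1 d2). split. apply Rmin_pos; auto. intros r Hr.
 pose proof (Rmin_l d1 d2); pose proof (Rmin_r d1 d2).
 specialize (Hu r ltac:(lra)). specialize (Hl r ltac:(lra)). apply Rabs_def1; lra. Qed.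

Lemma stepU f c R1 S :
  (forall r rr, 0 < r -> r < rr -> rr < R1 -> f r <= Kf f c rr) ->
  (forall eps, 0 < eps -> exists rr, 0 < rr < R1 /\ Kf f c rr < S + eps) ->
  forall eps, 0 < eps -> exists d, 0 < d /\ forall r, 0 < r < d -> f r < S + eps.
Proof. intros H1 Hinf eps He. destruct (Hinf eps He) as [rr [Hr Hk]]. exists rr. split; [lra|].
 intros r Hr'. specialize (H1 r rr ltac:(lra) ltac:(lra) ltac:(lra)). lra. Qed.

Lemma stepL f c R1 S : 0 < c -> 0 < R1 ->
  (forall rr, 0 < rr < R1 -> S <= Kf f c rr) -> 0 < S ->
  forall eps, 0 < eps -> exists d, 0 < d /\ forall r, 0 < r < d -> S - eps < f r.
Proof. intros Hc HR1 Hinf HS eps He.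
 exists (Rmin R1 (Rmin (S / (c + 1)) (eps / c))). split.
 { apply Rmin_pos; auto. apply Rmin_pos; apply Rdiv_lt_0_compat; lra. }
 intros r Hr. pose proof (Rmin_l R1 (Rmin (S / (c + 1)) (eps / c))).
 pose proof (Rmin_r R1 (Rmin (S / (c + 1)) (eps / c))).
 pose proof (Rmin_l (S / (c + 1)) (eps / c)). pose proof (Rmin_r (S / (c + 1)) (eps / c)).
 specialize (Hinf r ltac:(lra)). unfold Kf in Hinf.
 assert (H3 : (c + 1) * r < S). { assert (r < S / (c+1)) by lra. apply (Rmult_lt_compat_l (c+1)) in H3; [|lra].
   replace ((c + 1) * (S / (c + 1))) with S in H3 by (field; lra). lra. }
 assert (H4 : c * r < eps). { assert (r < eps / c) by lra. apply (Rmult_lt_compat_l c) in H4; [|lra].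
   replace (c * (eps / c)) with eps in H4 by (field; lra). lra. }
 destruct (Rle_dec (f r + c * r / 2) ((c + 1) * r)).
 - rewrite Rmax_right in Hinf by auto. lra.
 - rewrite Rmax_left in Hinf by lra. lra. Qed.

Lemma almost_mono g c R1 : 0 < c ->
  (forall r rr, 0 < r -> r < rr -> rr < R1 -> g r <= Kf g c rr) ->
  forall r rr, 0 < r -> r < rr -> rr < R1 -> Kf g c r <= Kf g c rr + (c + 1) * r.
Proof. intros Hc H1 r rr Hr Hrr HR. specialize (H1 r rr Hr Hrr HR).
 pose proof (Kf_pos g c rr Hc ltac:(lra)). unfold Kf at 1. apply Rmax_lub.
 - assert (c * r / 2 <= (c+1) * r) by nra. lra.
 - assert (0 <= (c+1) * rr) by nra. lra. Qed.

Lemma stepX f g c R1 Sf Sg : 0 < c -> 0 < R1 -> 0 <= Sg ->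
  (forall r rr, 0 < r -> r < rr -> 2 * rr < R1 ->
     f r <= Rmax (r * f r / rr + Kf g c (2 * rr) * (1 + r / rr) + c * rr / 2) ((c + 1) * rr)) ->
  (forall r rr, 0 < r -> r < rr -> rr < R1 -> g r <= Kf g c rr) ->
  (forall eps, 0 < eps -> exists rr, 0 < rr < R1 /\ Kf g c rr < Sg + eps) ->
  (forall eps, 0 < eps -> exists d, 0 < d /\ forall r, 0 < r < d -> f r < Sf + eps) ->
  forall eps, 0 < eps -> exists d, 0 < d /\ forall r, 0 < r < d -> f r < Sg + eps.
Proof. intros Hc HR1 HSg H2 H1g Hinf Uf eps He.
 destruct (Hinf (eps / 4) ltac:(lra)) as [R' [HR' HkR']].
 set (rr := Rmin (R' / 4) (eps / (8 * (c + 1)))).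
 assert (Hrr : 0 < rr) by (apply Rmin_pos; [lra| apply Rdiv_lt_0_compat; lra]).
 assert (Hrr1 : rr <= R' / 4) by apply Rmin_l.
 assert (Hrr2 : (c + 1) * rr <= eps / 8).
 { assert (rr <= eps / (8 * (c+1))) by apply Rmin_r. apply (Rmult_le_compat_l (c+1)) in H; [|lra].
   replace ((c + 1) * (eps / (8 * (c + 1)))) with (eps / 8) in H by (field; lra). auto. }
 set (H := Kf g c (2 * rr)).
 assert (HH : H < Sg + eps / 2).
 { pose proof (almost_mono g c R1 Hc H1g (2 * rr) R' ltac:(lra) ltac:(lra) ltac:(lra)). fold H in H0. lra. }
 assert (HH0 : 0 <= H). { pose proof (Kf_pos g c (2 * rr) Hc ltac:(lra)). fold H in H0. nra. }
 destruct (Uf 1 ltac:(lra)) as [d0 [Hd0 Hf0]].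
 set (Bf := Rmax (Sf + 1) 0).
 assert (HB0 : 0 <= Bf) by apply Rmax_r.
 assert (HB1 : Sf + 1 <= Bf) by apply Rmax_l.
 set (d := Rmin (Rmin d0 rr) (rr * eps / (4 * (Bf + H + 1)))).
 exists d. split.
 { apply Rmin_pos. apply Rmin_pos; auto. apply Rdiv_lt_0_compat. nra. lra. }
 intros r Hr. unfold d in Hr.
 assert (Hr0 : r < d0) by (pose proof (Rmin_l (Rmin d0 rr) (rr * eps / (4 * (Bf + H + 1)))); pose proof (Rmin_l d0 rr); lra).
 assert (Hr1 : r < rr) by (pose proof (Rmin_l (Rmin d0 rr) (rr * eps / (4 * (Bf + H + 1)))); pose proof (Rmin_r d0 rr); lra).
 assert (Hr2 : r < rr * eps / (4 * (Bf + H + 1))) by (pose proof (Rmin_r (Rmin d0 rr) (rr * eps / (4 * (Bf + H + 1)))); lra).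
 specialize (Hf0 r ltac:(lra)).
 specialize (H2 r rr ltac:(lra) Hr1 ltac:(lra)). fold H in H2.
 assert (Hq : r / rr < eps / (4 * (Bf + H + 1))).
 { apply (Rmult_lt_reg_r rr); [lra|]. replace (r / rr * rr) with r by (field; lra).
   replace (eps / (4 * (Bf + H + 1)) * rr) with (rr * eps / (4 * (Bf + H + 1))) by (field; lra). auto. }
 assert (Hq0 : 0 < r / rr) by (apply Rdiv_lt_0_compat; lra).
 assert (Hfr : r * f r / rr <= Bf * (r / rr)).
 { replace (r * f r / rr) with (f r * (r / rr)) by (field; lra). apply Rmult_le_compat_r; lra. }
 assert (Hsum : (Bf + H) * (r / rr) < eps / 4).
 { apply Rle_lt_trans with ((Bf + H + 1) * (r / rr)). nra.
   apply Rlt_le_trans with ((Bf + H + 1) * (eps / (4 * (Bf + H + 1)))). apply Rmult_lt_compat_l; lra.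
   right; field; lra. }
 assert (Hc2 : c * rr / 2 <= eps / 8) by nra.
 eapply Rle_lt_trans; [apply H2|]. apply Rmax_lub_lt.
 - replace (H * (1 + r / rr)) with (H + H * (r / rr)) by ring. nra.
 - lra. Qed.

Lemma limits_abs (f g : R -> R) (c R1 : R) : 0 < c -> 0 < R1 ->
  (forall r rr, 0 < r -> r < rr -> rr < R1 -> f r <= Kf f c rr) ->
  (forall r rr, 0 < r -> r < rr -> rr < R1 -> g r <= Kf g c rr) ->
  (forall r rr, 0 < r -> r < rr -> 2 * rr < R1 ->
     f r <= Rmax (r * f r / rr + Kf g c (2 * rr) * (1 + r / rr) + c * rr / 2) ((c + 1) * rr)) ->
  (forall r rr, 0 < r -> r < rr -> 2 * rr < R1 ->
     g r <= Rmax (r * g r / rr + Kf f c (2 * rr) * (1 + r / rr) + c * rr / 2) ((c + 1) * rr)) ->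
  (forall r, 0 < r -> r < R1 -> - f r <= g r) ->
  exists S, lim_right0 f S /\ lim_right0 g S.
Proof. intros Hc HR1 H1f H1g H2f H2g H3.
 assert (Hpos : forall h rr, 0 < rr < R1 -> 0 <= Kf h c rr).
 { intros h rr Hr. pose proof (Kf_pos h c rr Hc ltac:(lra)). nra. }
 destruct (inf_ex (Kf f c) R1 HR1 (Hpos f)) as [Sf [HSf0 [HSf1 HSf2]]].
 destruct (inf_ex (Kf g c) R1 HR1 (Hpos g)) as [Sg [HSg0 [HSg1 HSg2]]].
 pose proof (stepU f c R1 Sf H1f HSf2) as Uf.
 pose proof (stepU g c R1 Sg H1g HSg2) as Ug.
 pose proof (stepX f g c R1 Sf Sg Hc HR1 HSg0 H2f H1g HSg2 Uf) as Xf.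
 pose proof (stepX g f c R1 Sg Sf Hc HR1 HSf0 H2g H1f HSf2 Ug) as Xg.
 assert (Hcmp : forall (h : R -> R) S1 S2,
   (forall eps, 0 < eps -> exists d, 0 < d /\ forall r, 0 < r < d -> S1 - eps < h r) ->
   (forall eps, 0 < eps -> exists d, 0 < d /\ forall r, 0 < r < d -> h r < S2 + eps) -> S1 <= S2).
 { intros h S1 S2 HL HU. apply Rnot_lt_le. intros Hlt.
   destruct (HL ((S1 - S2)/2) ltac:(lra)) as [d1 [Hd1 Hl]]. destruct (HU ((S1 - S2)/2) ltac:(lra)) as [d2 [Hd2 Hu]].
   set (r := Rmin d1 d2 / 2). assert (0 < Rmin d1 d2) by (apply Rmin_pos; auto).
   pose proof (Rmin_l d1 d2); pose proof (Rmin_r d1 d2).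
   specialize (Hl r ltac:(unfold r; lra)). specialize (Hu r ltac:(unfold r; lra)). lra. }
 destruct (Rlt_or_le 0 Sf) as [Hp|Hz].
 - pose proof (stepL f c R1 Sf Hc HR1 HSf1 Hp) as Lf.
   assert (Sf <= Sg) by (apply (Hcmp f); auto).
   pose proof (stepL g c R1 Sg Hc HR1 HSg1 ltac:(lra)) as Lg.
   assert (Sg <= Sf) by (apply (Hcmp g); auto).
   exists Sf. split. apply lim_of_bounds; auto. replace Sf with Sg by lra. apply lim_of_bounds; auto.
 - assert (HSg : Sg <= 0).
   { apply Rnot_lt_le. intros Hp. pose proof (stepL g c R1 Sg Hc HR1 HSg1 Hp) as Lg.
     assert (Sg <= Sf) by (apply (Hcmp g); auto). lra. }
   assert (Sf = 0) by lra. assert (Sg = 0) by lra. subst.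
   exists 0. split; apply lim_of_bounds; auto.
   + intros eps He. destruct (Ug eps He) as [d [Hd Hu]]. exists (Rmin d R1). split. apply Rmin_pos; auto.
     intros r Hr. pose proof (Rmin_l d R1); pose proof (Rmin_r d R1).
     specialize (Hu r ltac:(lra)). specialize (H3 r ltac:(lra) ltac:(lra)). lra.
   + intros eps He. destruct (Uf eps He) as [d [Hd Hu]]. exists (Rmin d R1). split. apply Rmin_pos; auto.
     intros r Hr. pose proof (Rmin_l d R1); pose proof (Rmin_r d R1).
     specialize (Hu r ltac:(lra)). specialize (H3 r ltac:(lra) ltac:(lra)). lra.
Qed.

Lemma Rmax_mono a a' b : a <= a' -> Rmax a b <= Rmax a' b.
Proof. intros H. apply Rmax_lub. apply Rle_trans with a'; auto; apply Rmax_l. apply Rmax_r. Qed.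

Lemma core n U u v y : (1 <= n)%nat -> psubset U (inRn n) ->
  (forall x, U x -> exists r, 0 < r /\ psubset (ball n x r) U) ->
  continuous_on n (clos n U) u -> continuous_on n (clos n U) v ->
  (forall phi p q x0, C2data n U phi p q -> U x0 -> loc_max n U (fun x => u x - phi x) x0 ->
     forall L, inf_lap_plus n p q x0 L -> - L + u x0 - v x0 <= 0) ->
  (forall phi p q x0, C2data n U phi p q -> U x0 -> loc_min n U (fun x => u x - phi x) x0 ->
     forall L, inf_lap_minus n p q x0 L -> - L + u x0 - v x0 >= 0) ->
  U y ->
  exists Sp Sm, lim_right0 (S_plus n u y) Sp /\ lim_right0 (S_minus n u y) Sm /\ Sp = - Sm.
Proof.
 intros Hn HUin Hopen Hcu Hcv Hsub Hsup Hy.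
 assert (Ucl : forall z, U z -> clos n U z).
 { intros z Hz. split. apply HUin; auto. intros r Hr. exists z. split; auto. rewrite rdist_refl; auto. }
 destruct (Hopen y Hy) as [rho0 [Hrho0 Hball]].
 destruct (Hcu y (Ucl y Hy) 1 ltac:(lra)) as [du [Hdu Hu1]].
 destruct (Hcv y (Ucl y Hy) 1 ltac:(lra)) as [dv [Hdv Hv1]].
 set (rho := Rmin rho0 (Rmin du dv)).
 assert (Hrho : 0 < rho) by (apply Rmin_pos; auto; apply Rmin_pos; auto).
 assert (Hr1 : rho <= rho0) by apply Rmin_l.
 assert (Hr2 : rho <= du) by (pose proof (Rmin_r rho0 (Rmin du dv)); pose proof (Rmin_l du dv); unfold rho; lra).
 assert (Hr3 : rho <= dv) by (pose proof (Rmin_r rho0 (Rmin du dv)); pose proof (Rmin_r du dv); unfold rho; lra).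
 clearbody rho.
 assert (HB : forall z, inRn n z -> rdist n z y < rho -> U z).
 { intros z Hz Hd. apply Hball. split; auto. lra. }
 set (K := Rabs (u y - v y) + 2).
 assert (HK0 : 0 <= K) by (unfold K; pose proof (Rabs_pos (u y - v y)); lra).
 assert (HK : forall z, U z -> rdist n z y < rho -> Rabs (u z - v z) <= K).
 { intros z Hz Hd. specialize (Hu1 z (Ucl z Hz) ltac:(lra)). specialize (Hv1 z (Ucl z Hz) ltac:(lra)).
   unfold K. replace (u z - v z) with ((u z - u y) + (u y - v y) + - (v z - v y)) by ring.
   pose proof (Rabs_triang (u z - u y + (u y - v y)) (- (v z - v y))).
   pose proof (Rabs_triang (u z - u y) (u y - v y)). rewrite Rabs_Ropp in H. lra. }
 assert (Hc : forall z, inRn n z -> rdist n z y < rho -> rel_cont n (fun w => inRn n w /\ rdist n w y < rho) u z).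
 { intros z Hz Hd e He. destruct (Hcu z (Ucl z (HB z Hz Hd)) e He) as [d [Hd0 H]].
   exists d. split; auto. intros w [Hw1 Hw2] Hw3. apply H; auto. }
 assert (HUin' : forall z, U z -> inRn n z) by (intros; apply HUin; auto).
 assert (Hyi : inRn n y) by auto.
 set (c := K + 1).
 set (f := S_plus n u y).
 set (g := fun r => (u y - sph_min n u y r) / r).
 assert (Hmax : forall x R, inRn n x -> 0 < R -> rdist n x y + R < rho -> is_max_on (sphere n x R) u (sph_max n u x R)).
 { intros; eapply sph_max_spec; eauto. }
 assert (Hmin : forall x R, inRn n x -> 0 < R -> rdist n x y + R < rho -> is_min_on (sphere n x R) u (sph_min n u x R)).
 { intros; eapply sph_min_spec; eauto. }
 assert (CBp : forall x R, inRn n x -> 0 < R -> rdist n x y + R < rho ->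
    forall w, cball n x R w -> u w <= u x + kx n c u x R * rdist n w x).
 { intros; eapply CB_plus; eauto. }
 assert (CBm : forall x R, inRn n x -> 0 < R -> rdist n x y + R < rho ->
    forall w, cball n x R w -> u x - hx n c u x R * rdist n w x <= u w).
 { intros; eapply CB_minus; eauto. }
 assert (Hyy : rdist n y y = 0) by apply rdist_refl.
 assert (Hc0 : 0 < c) by (unfold c; lra).
 assert (Hkf : forall R, kx n c u y R = Kf f c R) by reflexivity.
 assert (Hhg : forall R, hx n c u y R = Kf g c R) by reflexivity.
 destruct (limits_abs f g c rho Hc0 Hrho) as [S [Hf Hg]].
 - intros r R Hr HrR HR. destruct (Hmax y r Hyi Hr ltac:(lra)) as [[z [Hz Hzm]] _].
   destruct Hz as [Hzi Hzr].
   pose proof (CBp y R Hyi ltac:(lra) ltac:(lra) z ltac:(split; auto; lra)). rewrite Hkf, Hzr in H.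
   change (f r) with ((sph_max n u y r - u y) / r). rewrite <- Hzm. apply (Rmult_le_reg_r r); auto. replace ((u z - u y) / r * r) with (u z - u y) by (field; lra). lra.
 - intros r R Hr HrR HR. destruct (Hmin y r Hyi Hr ltac:(lra)) as [[z [Hz Hzm]] _].
   destruct Hz as [Hzi Hzr].
   pose proof (CBm y R Hyi ltac:(lra) ltac:(lra) z ltac:(split; auto; lra)). rewrite Hhg, Hzr in H.
   change (g r) with ((u y - sph_min n u y r) / r). rewrite <- Hzm. apply (Rmult_le_reg_r r); auto. replace ((u y - u z) / r * r) with (u y - u z) by (field; lra). lra.
 - intros r R Hr HrR HR. destruct (Hmax y r Hyi Hr ltac:(lra)) as [[z [Hz Hzm]] _].
   destruct Hz as [Hzi Hzr].
   assert (Hfr : u z - u y = r * f r). { unfold f, S_plus. rewrite <- Hzm. field. lra. }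
   pose proof (CBm z R Hzi ltac:(lra) ltac:(lra) y ltac:(split; auto; rewrite rdist_sym; lra)) as H1.
   rewrite rdist_sym, Hzr in H1.
   destruct (Hmin z R Hzi ltac:(lra) ltac:(lra)) as [[w [Hw Hwm]] _]. destruct Hw as [Hwi Hwr].
   assert (Hwy : rdist n w y <= 2 * R) by (pose proof (rdist_triangle n w z y); lra).
   pose proof (CBm y (2 * R) Hyi ltac:(lra) ltac:(lra) w ltac:(split; auto)) as H2.
   rewrite Hhg in H2. set (Hh := Kf g c (2 * R)) in *.
   assert (HH0 : 0 <= Hh). { pose proof (Kf_pos g c (2 * R) Hc0 ltac:(lra)). fold Hh in H. nra. }
   assert (Hwy' : rdist n w y <= R + r) by (pose proof (rdist_triangle n w z y); lra).
   assert (Hm : u y - Hh * (R + r) <= sph_min n u z R).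
   { rewrite <- Hwm. assert (Hh * rdist n w y <= Hh * (R + r)) by (apply Rmult_le_compat_l; auto). lra. }
   assert (Hfz : f r <= hx n c u z R).
   { apply (Rmult_le_reg_r r); auto. rewrite Rmult_comm, <- Hfr. lra. }
   eapply Rle_trans; [apply Hfz|]. unfold hx. apply Rmax_mono.
   assert ((u z - sph_min n u z R) / R <= r * f r / R + Hh * (1 + r / R)).
   { replace (r * f r / R + Hh * (1 + r / R)) with ((u z - u y + Hh * (R + r)) / R) by (rewrite Hfr; field; lra).
     unfold Rdiv. apply Rmult_le_compat_r. left; apply Rinv_0_lt_compat; lra. lra. }
   lra.
 - intros r R Hr HrR HR. destruct (Hmin y r Hyi Hr ltac:(lra)) as [[z [Hz Hzm]] _].
   destruct Hz as [Hzi Hzr].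
   assert (Hgr : u y - u z = r * g r). { unfold g. rewrite <- Hzm. field. lra. }
   pose proof (CBp z R Hzi ltac:(lra) ltac:(lra) y ltac:(split; auto; rewrite rdist_sym; lra)) as H1.
   rewrite rdist_sym, Hzr in H1.
   destruct (Hmax z R Hzi ltac:(lra) ltac:(lra)) as [[w [Hw Hwm]] _]. destruct Hw as [Hwi Hwr].
   assert (Hwy : rdist n w y <= 2 * R) by (pose proof (rdist_triangle n w z y); lra).
   pose proof (CBp y (2 * R) Hyi ltac:(lra) ltac:(lra) w ltac:(split; auto)) as H2.
   rewrite Hkf in H2. set (Hh := Kf f c (2 * R)) in *.
   assert (HH0 : 0 <= Hh). { pose proof (Kf_pos f c (2 * R) Hc0 ltac:(lra)). fold Hh in H. nra. }
   assert (Hwy' : rdist n w y <= R + r) by (pose proof (rdist_triangle n w z y); lra).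
   assert (Hm : sph_max n u z R <= u y + Hh * (R + r)).
   { rewrite <- Hwm. assert (Hh * rdist n w y <= Hh * (R + r)) by (apply Rmult_le_compat_l; auto). lra. }
   assert (Hgz : g r <= kx n c u z R).
   { apply (Rmult_le_reg_r r); auto. rewrite Rmult_comm, <- Hgr. lra. }
   eapply Rle_trans; [apply Hgz|]. unfold kx. apply Rmax_mono.
   assert ((sph_max n u z R - u z) / R <= r * g r / R + Hh * (1 + r / R)).
   { replace (r * g r / R + Hh * (1 + r / R)) with ((u y - u z + Hh * (R + r)) / R) by (rewrite Hgr; field; lra).
     unfold Rdiv. apply Rmult_le_compat_r. left; apply Rinv_0_lt_compat; lra. lra. }
   lra.
 - intros r Hr HrR. destruct (Hmax y r Hyi Hr ltac:(lra)) as [_ HM].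
   destruct (Hmin y r Hyi Hr ltac:(lra)) as [[z [Hz Hzm]] _]. specialize (HM z Hz).
   unfold f, g, S_plus. apply (Rmult_le_reg_r r); auto.
   replace (- ((sph_max n u y r - u y) / r) * r) with (u y - sph_max n u y r) by (field; lra).
   replace ((u y - sph_min n u y r) / r * r) with (u y - sph_min n u y r) by (field; lra). lra.
 - exists S, (- S). split; [exact Hf|split; [|ring]].
   intros e He. destruct (Hg e He) as [d [Hd Hd1]]. exists d. split; auto. intros r Hr.
   specialize (Hd1 r Hr). unfold g in Hd1. unfold S_minus.
   replace ((sph_min n u y r - u y) / r - - S) with (- ((u y - sph_min n u y r) / r - S)) by (field; lra).
   rewrite Rabs_Ropp. auto.
Qed.

Theorem mainTheorem11 (n : nat) (U : pt -> Prop) (u1 u2 : pt -> R) :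
  (1 <= n)%nat ->
  domain n U -> bdd n U -> smooth_boundary n U ->
  continuous_on n (clos n U) u1 ->
  continuous_on n (clos n U) u2 ->
  visc_sol n U u1 u2 ->
  forall y, U y ->
  forall u, (u = u1 \/ u = u2) ->
    exists Sp Sm,
      lim_right0 (S_plus n u y) Sp /\
      lim_right0 (S_minus n u y) Sm /\
      Sp = - Sm.
Proof.
 intros Hn Hdom Hbdd Hsb Hc1 Hc2 Hsol y Hy u Hu.
 destruct Hdom as [[HUin Hopen] _].
 destruct Hsol as [[_ [_ Hs]] [_ [_ Hp]]].
 destruct Hu as [-> | ->].
 - apply (core n U u1 u2 y Hn HUin Hopen Hc1 Hc2); auto.
   + intros phi p q x0 H1 H2 H3 L H4. exact (Hs true phi p q x0 H1 H2 H3 L H4).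
   + intros phi p q x0 H1 H2 H3 L H4. exact (Hp true phi p q x0 H1 H2 H3 L H4).
 - apply (core n U u2 u1 y Hn HUin Hopen Hc2 Hc1); auto.
   + intros phi p q x0 H1 H2 H3 L H4. exact (Hs false phi p q x0 H1 H2 H3 L H4).
   + intros phi p q x0 H1 H2 H3 L H4. exact (Hp false phi p q x0 H1 H2 H3 L H4).
Qed.
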